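(* Let $T$ be a consistent theory extending $I\Delta_0+\Omega_1$, and let $\varphi(x)$ be a formula with one free variable $x$. Then there exists a sentence $\psi$ such that $T\vdash \psi\leftrightarrow\varphi(\ulcorner\psi\urcorner_Z)$.
   Context: Fibonacci numbers: $F_1=1$, $F_2=2$, $F_n=F_{n-1}+F_{n-2}$. Cantor pairing $\langle x,y\rangle=\frac{(x+y)(x+y+1)}{2}+x$. For a finite sequence $[a_1,\dots,a_m]$ of natural numbers, $\operatorname{Seq}_Z([a_1,\dots,a_m])=\sum_{i=1}^m F_{2\langle a_i,i\rangle+1}$ (empty sequence $\mapsto 0$). Each symbol of the (arithmetical) language has a fixed positive code $\ulcorner s\urcorner$, with variables $v_i$ coded $i+k$ for a fixed offset $k$ exceeding all other symbol codes, and a formula $\chi = s_1\cdots s_m$ is coded by $\ulcorner\chi\urcorner_Z=\operatorname{Seq}_Z([\ulcorner s_1\urcorner,\dots,\ulcorner s_m\urcorner])$; in $\varphi(\ulcorner\psi\urcorner_Z)$ the code is substituted as a numeral. $I\Delta_0+\Omega_1$ is $\Delta_0$-induction plus the axiom $\Omega_1$ asserting totality of $\omega_1(x)=x^{\lfloor\log_2 x\rfloor}$. *)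

(* Defs.v *)
From Stdlib Require Import Arith List.
Import ListNotations.

Inductive term : Type :=
| tvar : nat -> term
| tzero : term
| tsucc : term -> term
| tplus : term -> term -> term
| ttimes : term -> term -> term.

Inductive formula : Type :=
| feq : term -> term -> formula
| fle : term -> term -> formula
| fneg : formula -> formula
| fimp : formula -> formula -> formula
| fall : nat -> formula -> formula.

Definition fex (x : nat) (f : formula) : formula := fneg (fall x (fneg f)).
Definition fand (a b : formula) : formula := fneg (fimp a (fneg b)).
Definition fiff (a b : formula) : formula := fand (fimp a b) (fimp b a).

Inductive symbol : Type :=
| SZero | SSucc | SPlus | STimes | SEq | SLe | SNeg | SImp | SAll
| SVar : nat -> symbol.

Fixpoint term_syms (t : term) : list symbol :=
  match t with
  | tvar i => [SVar i]
  | tzero => [SZero]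
  | tsucc u => SSucc :: term_syms u
  | tplus u v => SPlus :: term_syms u ++ term_syms v
  | ttimes u v => STimes :: term_syms u ++ term_syms v
  end.

Fixpoint formula_syms (f : formula) : list symbol :=
  match f with
  | feq u v => SEq :: term_syms u ++ term_syms v
  | fle u v => SLe :: term_syms u ++ term_syms v
  | fneg g => SNeg :: formula_syms g
  | fimp g h => SImp :: formula_syms g ++ formula_syms h
  | fall i g => SAll :: SVar i :: formula_syms g
  end.

Definition admissible_code (c : symbol -> nat) : Prop :=
  (forall s s', c s = c s' -> s = s') /\
  (forall s, 0 < c s) /\
  exists k, (forall i, c (SVar i) = i + k) /\
            (forall s, (forall i, s <> SVar i) -> c s < k).

(* Fibonacci numbers with F_1 = 1, F_2 = 2, F_n = F_(n-1) + F_(n-2);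
   (F_0 := 1 is never used by the coding, index 2<a,i>+1 >= 1) *)
Fixpoint fibZ (n : nat) : nat :=
  match n with
  | 0 => 1
  | S m => match m with
           | 0 => 1
           | S p => fibZ m + fibZ p
           end
  end.

Definition cantor (x y : nat) : nat := (x + y) * (x + y + 1) / 2 + x.

Fixpoint seqZ_from (i : nat) (s : list nat) : nat :=
  match s with
  | [] => 0
  | a :: s' => fibZ (2 * cantor a i + 1) + seqZ_from (S i) s'
  end.

Definition seqZ (s : list nat) : nat := seqZ_from 1 s.

Definition code (c : symbol -> nat) (f : formula) : nat :=
  seqZ (map c (formula_syms f)).

Fixpoint occurs_term (x : nat) (t : term) : bool :=
  match t with
  | tvar i => Nat.eqb i x
  | tzero => false
  | tsucc u => occurs_term x u
  | tplus u v | ttimes u v => occurs_term x u || occurs_term x v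
  end.

Fixpoint free_in (x : nat) (f : formula) : bool :=
  match f with
  | feq u v | fle u v => occurs_term x u || occurs_term x v
  | fneg g => free_in x g
  | fimp g h => free_in x g || free_in x h
  | fall i g => if Nat.eqb i x then false else free_in x g
  end.

Definition sentence (f : formula) : Prop := forall x, free_in x f = false.

Fixpoint subst_term (x : nat) (t : term) (u : term) : term :=
  match u with
  | tvar i => if Nat.eqb i x then t else tvar i
  | tzero => tzero
  | tsucc v => tsucc (subst_term x t v)
  | tplus v w => tplus (subst_term x t v) (subst_term x t w)
  | ttimes v w => ttimes (subst_term x t v) (subst_term x t w)
  end.

Fixpoint subst (x : nat) (t : term) (f : formula) : formula :=
  match f with
  | feq u v => feq (subst_term x t u) (subst_term x t v)
  | fle u v => fle (subst_term x t u) (subst_term x t v)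
  | fneg g => fneg (subst x t g)
  | fimp g h => fimp (subst x t g) (subst x t h)
  | fall i g => if Nat.eqb i x then fall i g else fall i (subst x t g)
  end.

Fixpoint free_for (t : term) (x : nat) (f : formula) : bool :=
  match f with
  | feq _ _ | fle _ _ => true
  | fneg g => free_for t x g
  | fimp g h => free_for t x g && free_for t x h
  | fall i g =>
      if negb (free_in x (fall i g)) then true
      else negb (occurs_term i t) && free_for t x g
  end.

Fixpoint numeral (n : nat) : term :=
  match n with
  | 0 => tzero
  | S m => tsucc (numeral m)
  end.

Inductive logical_axiom : formula -> Prop :=
| LA1 a b : logical_axiom (fimp a (fimp b a))
| LA2 a b c : logical_axiom
    (fimp (fimp a (fimp b c)) (fimp (fimp a b) (fimp a c)))
| LA3 a b : logical_axiom
    (fimp (fimp (fneg b) (fneg a)) (fimp (fimp (fneg b) a) b))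
| LA4 x t a : free_for t x a = true ->
    logical_axiom (fimp (fall x a) (subst x t a))
| LA5 x a b : free_in x a = false ->
    logical_axiom (fimp (fall x (fimp a b)) (fimp a (fall x b)))
| LEqRefl x : logical_axiom (feq (tvar x) (tvar x))
| LEqEq x y z : logical_axiom
    (fimp (feq (tvar x) (tvar y))
          (fimp (feq (tvar x) (tvar z)) (feq (tvar y) (tvar z))))
| LEqLe1 x y z : logical_axiom
    (fimp (feq (tvar x) (tvar y))
          (fimp (fle (tvar x) (tvar z)) (fle (tvar y) (tvar z))))
| LEqLe2 x y z : logical_axiom
    (fimp (feq (tvar x) (tvar y))
          (fimp (fle (tvar z) (tvar x)) (fle (tvar z) (tvar y))))
| LEqSucc x y : logical_axiom
    (fimp (feq (tvar x) (tvar y)) (feq (tsucc (tvar x)) (tsucc (tvar y))))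
| LEqPlus1 x y z : logical_axiom
    (fimp (feq (tvar x) (tvar y))
          (feq (tplus (tvar x) (tvar z)) (tplus (tvar y) (tvar z))))
| LEqPlus2 x y z : logical_axiom
    (fimp (feq (tvar x) (tvar y))
          (feq (tplus (tvar z) (tvar x)) (tplus (tvar z) (tvar y))))
| LEqTimes1 x y z : logical_axiom
    (fimp (feq (tvar x) (tvar y))
          (feq (ttimes (tvar x) (tvar z)) (ttimes (tvar y) (tvar z))))
| LEqTimes2 x y z : logical_axiom
    (fimp (feq (tvar x) (tvar y))
          (feq (ttimes (tvar z) (tvar x)) (ttimes (tvar z) (tvar y)))).

Inductive provable (T : formula -> Prop) : formula -> Prop :=
| PHyp f : T f -> provable T f
| PAx f : logical_axiom f -> provable T f
| PMP a b : provable T a -> provable T (fimp a b) -> provable T b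
| PGen x a : provable T a -> provable T (fall x a).

Definition consistent (T : formula -> Prop) : Prop :=
  ~ exists f, provable T f /\ provable T (fneg f).

Inductive delta0 : formula -> Prop :=
| D0eq u v : delta0 (feq u v)
| D0le u v : delta0 (fle u v)
| D0neg g : delta0 g -> delta0 (fneg g)
| D0imp g h : delta0 g -> delta0 h -> delta0 (fimp g h)
(* bounded quantifier  forall v_x <= t, g  (v_x not occurring in t);
   the bounded existential is  ~ forall v_x <= t, ~ g *)
| D0ball x t g : occurs_term x t = false -> delta0 g ->
    delta0 (fall x (fimp (fle (tvar x) t) g)).

Definition v0 := tvar 0.
Definition v1 := tvar 1.
Definition v2 := tvar 2.

Inductive IDelta0_axiom : formula -> Prop :=
| B1 : IDelta0_axiom (fneg (feq (tsucc v0) tzero))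
| B2 : IDelta0_axiom (fimp (feq (tsucc v0) (tsucc v1)) (feq v0 v1))
| B3 : IDelta0_axiom (feq (tplus v0 tzero) v0)
| B4 : IDelta0_axiom (feq (tplus v0 (tsucc v1)) (tsucc (tplus v0 v1)))
| B5 : IDelta0_axiom (feq (ttimes v0 tzero) tzero)
| B6 : IDelta0_axiom (feq (ttimes v0 (tsucc v1)) (tplus (ttimes v0 v1) v0))
| B7 : IDelta0_axiom (fiff (fle v0 v1) (fex 2 (feq (tplus v2 v0) v1)))
| Ind x g : delta0 g ->
    IDelta0_axiom
      (fimp (subst x tzero g)
            (fimp (fall x (fimp g (subst x (tsucc (tvar x)) g)))
                  (fall x g))).

Fixpoint eval (e : nat -> nat) (t : term) : nat :=
  match t with
  | tvar i => e i
  | tzero => 0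
  | tsucc u => S (eval e u)
  | tplus u v => eval e u + eval e v
  | ttimes u v => eval e u * eval e v
  end.

Definition update (e : nat -> nat) (x a : nat) : nat -> nat :=
  fun i => if Nat.eqb i x then a else e i.

Fixpoint sat (e : nat -> nat) (f : formula) : Prop :=
  match f with
  | feq u v => eval e u = eval e v
  | fle u v => eval e u <= eval e v
  | fneg g => ~ sat e g
  | fimp g h => sat e g -> sat e h
  | fall i g => forall a, sat (update e i a) g
  end.

Definition omega1 (a : nat) : nat := a ^ Nat.log2 a.

Definition omega1_graph (E : formula) (x y : nat) : Prop :=
  x <> y /\ delta0 E /\ (forall z, free_in z E = true -> z = x \/ z = y) /\
  forall e, 0 < e x -> (sat e E <-> e y = omega1 (e x)).

Definition extends_IDelta0_Omega1 (T : formula -> Prop) : Prop :=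
  (forall f, IDelta0_axiom f -> provable T f) /\
  exists E x y, omega1_graph E x y /\ provable T (fall x (fex y E)).

(* Main.v *)
Require Import Defs.
From Stdlib Require Import Arith Lia List Bool Classical Setoid Morphisms Factorial.
Import ListNotations.
Set Warnings "-deprecated,-intuition-auto-with-star".

Module MP1.

Definition closed_t (t : term) : Prop := forall i, occurs_term i t = false.

Lemma closed_numeral n : closed_t (numeral n).
Proof. intro i; induction n; simpl; auto. Qed.

Lemma subst_term_notocc x t u : occurs_term x u = false -> subst_term x t u = u.
Proof.
  induction u; simpl; intros H; auto.
  - rewrite H; auto.
  - rewrite IHu; auto.
  - apply orb_false_iff in H; destruct H; rewrite IHu1, IHu2; auto.
  - apply orb_false_iff in H; destruct H; rewrite IHu1, IHu2; auto.
Qed.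

Lemma subst_notfree x t f : free_in x f = false -> subst x t f = f.
Proof.
  induction f; simpl; intros H.
  - apply orb_false_iff in H; destruct H; rewrite !subst_term_notocc; auto.
  - apply orb_false_iff in H; destruct H; rewrite !subst_term_notocc; auto.
  - rewrite IHf; auto.
  - apply orb_false_iff in H; destruct H; rewrite IHf1, IHf2; auto.
  - destruct (Nat.eqb n x) eqn:E; auto. rewrite IHf; auto.
Qed.

Lemma free_for_closed t x f : closed_t t -> free_for t x f = true.
Proof.
  intros Ht; induction f; simpl; auto.
  - rewrite IHf1, IHf2; auto.
  - destruct (negb _); auto. rewrite Ht, IHf; auto.
Qed.

Fixpoint qf (f : formula) : bool :=
  match f with
  | feq _ _ | fle _ _ => true
  | fneg g => qf g
  | fimp g h => qf g && qf h
  | fall _ _ => false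
  end.

Lemma free_for_qf t x f : qf f = true -> free_for t x f = true.
Proof.
  induction f; simpl; intros H; auto.
  apply andb_true_iff in H; destruct H; rewrite IHf1, IHf2; auto.
  discriminate.
Qed.

Lemma qf_subst x t f : qf f = true -> qf (subst x t f) = true.
Proof.
  induction f; simpl; intros H; auto.
  apply andb_true_iff in H; destruct H; rewrite IHf1, IHf2; auto.
  discriminate.
Qed.

Lemma eval_ext e e' t : (forall i, occurs_term i t = true -> e i = e' i) -> eval e t = eval e' t.
Proof.
  induction t; simpl; intros H; auto.
  - apply H. apply Nat.eqb_refl.
  - rewrite IHt1, IHt2; auto; intros i Hi; apply H; rewrite Hi; auto with bool.
  - rewrite IHt1, IHt2; auto; intros i Hi; apply H; rewrite Hi; auto with bool.
Qed.

Lemma eval_closed e e' t : closed_t t -> eval e t = eval e' t.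
Proof. intros Ht; apply eval_ext; intros i Hi; rewrite Ht in Hi; discriminate. Qed.

Lemma eval_numeral e n : eval e (numeral n) = n.
Proof. induction n; simpl; auto. Qed.

Lemma update_eq e x a : update e x a x = a.
Proof. unfold update; rewrite Nat.eqb_refl; auto. Qed.

Lemma update_neq e x a i : i <> x -> update e x a i = e i.
Proof. unfold update; intros H; apply Nat.eqb_neq in H; rewrite H; auto. Qed.

Lemma sat_ext f : forall e e', (forall i, free_in i f = true -> e i = e' i) -> (sat e f <-> sat e' f).
Proof.
  induction f; simpl; intros e e' H.
  - rewrite (eval_ext e e' t), (eval_ext e e' t0); try tauto;
    intros i Hi; apply H; rewrite Hi; auto with bool.
  - rewrite (eval_ext e e' t), (eval_ext e e' t0); try tauto;
    intros i Hi; apply H; rewrite Hi; auto with bool.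
  - rewrite (IHf e e'); tauto.
  - rewrite (IHf1 e e'), (IHf2 e e'); try tauto;
    intros i Hi; apply H; rewrite Hi; auto with bool.
  - split; intros Hs a; [rewrite <- (IHf (update e n a)) | rewrite (IHf (update e n a))]; auto;
    intros i Hi; unfold update; destruct (Nat.eqb i n) eqn:E; auto;
    apply H; rewrite Nat.eqb_sym, E; auto.
Qed.

Lemma eval_subst_term e x t u : eval e (subst_term x t u) = eval (update e x (eval e t)) u.
Proof.
  induction u; simpl; auto.
  unfold update; destruct (Nat.eqb n x); auto.
Qed.

Lemma sat_subst_closed x t f : closed_t t ->
  forall e, sat e (subst x t f) <-> sat (update e x (eval e t)) f.
Proof.
  intros Ht; induction f; simpl; intros e.
  - rewrite !eval_subst_term; tauto.
  - rewrite !eval_subst_term; tauto.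
  - rewrite IHf; tauto.
  - rewrite IHf1, IHf2; tauto.
  - destruct (Nat.eqb n x) eqn:E.
    + apply Nat.eqb_eq in E; subst n. simpl.
      split; intros Hs a; [rewrite <- (sat_ext f (update e x a)) | rewrite (sat_ext f (update e x a))]; auto;
      intros i _; unfold update; destruct (Nat.eqb i x); auto.
    + simpl.
      assert (Hu : forall a, forall i, update (update e n a) x (eval (update e n a) t) i =
                              update (update e x (eval e t)) n a i).
      { intros a i; rewrite (eval_closed (update e n a) e t Ht); unfold update.
        destruct (Nat.eqb i x) eqn:E1; destruct (Nat.eqb i n) eqn:E2; auto.
        apply Nat.eqb_eq in E1; apply Nat.eqb_eq in E2; subst; rewrite Nat.eqb_refl in E; discriminate. }
      split; intros Hs a; specialize (Hs a).
      * rewrite IHf in Hs. rewrite <- (sat_ext f _ _ (fun i _ => Hu a i)); auto.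
      * rewrite IHf. rewrite (sat_ext f _ _ (fun i _ => Hu a i)); auto.
Qed.

Lemma occurs_subst_term v x t u : occurs_term v (subst_term x t u) = true ->
  (occurs_term v u = true /\ v <> x) \/ occurs_term v t = true.
Proof.
  induction u; simpl; intros H; auto; try discriminate.
  - destruct (Nat.eqb n x) eqn:E; auto. simpl in H. left; split; auto.
    apply Nat.eqb_eq in H; apply Nat.eqb_neq in E; subst; auto.
  - apply orb_true_iff in H; destruct H as [H|H]; [destruct (IHu1 H) | destruct (IHu2 H)];
    intuition; left; rewrite H1; auto with bool.
  - apply orb_true_iff in H; destruct H as [H|H]; [destruct (IHu1 H) | destruct (IHu2 H)];
    intuition; left; rewrite H1; auto with bool.
Qed.

Lemma free_in_subst v x t f : free_in v (subst x t f) = true ->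
  (free_in v f = true /\ v <> x) \/ occurs_term v t = true.
Proof.
  induction f; simpl; intros H.
  - apply orb_true_iff in H; destruct H as [H|H]; destruct (occurs_subst_term _ _ _ _ H);
    intuition; left; rewrite H1; auto with bool.
  - apply orb_true_iff in H; destruct H as [H|H]; destruct (occurs_subst_term _ _ _ _ H);
    intuition; left; rewrite H1; auto with bool.
  - auto.
  - apply orb_true_iff in H; destruct H as [H|H]; [destruct (IHf1 H) | destruct (IHf2 H)];
    intuition; left; rewrite H1; auto with bool.
  - destruct (Nat.eqb n x) eqn:E; simpl in H.
    + destruct (Nat.eqb n v) eqn:E2; try discriminate. left; split; auto.
      apply Nat.eqb_eq in E; subst. intro; subst; rewrite Nat.eqb_refl in E2; discriminate.
    + destruct (Nat.eqb n v) eqn:E2; try discriminate. destruct (IHf H); auto.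
Qed.

Lemma sentence_subst x t f : closed_t t -> (forall y, free_in y f = true -> y = x) ->
  sentence (subst x t f).
Proof.
  intros Ht Hf y. destruct (free_in y (subst x t f)) eqn:E; auto.
  destruct (free_in_subst _ _ _ _ E) as [[H1 H2]|H]; [apply Hf in H1; congruence|].
  rewrite Ht in H; discriminate.
Qed.

Lemma sat_sentence f e e' : sentence f -> (sat e f <-> sat e' f).
Proof. intros H; apply sat_ext; intros i Hi; rewrite H in Hi; discriminate. Qed.

Fixpoint fsize (f : formula) : nat :=
  match f with
  | feq _ _ | fle _ _ => 1
  | fneg g => S (fsize g)
  | fimp g h => S (fsize g + fsize h)
  | fall _ g => S (fsize g)
  end.

Lemma fsize_subst x t f : fsize (subst x t f) = fsize f.
Proof. induction f; simpl; auto. destruct (Nat.eqb n x); simpl; auto. Qed.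

Lemma delta0_subst x t g : closed_t t -> delta0 g -> delta0 (subst x t g).
Proof.
  intros Ht H; induction H; simpl; try constructor; auto.
  match goal with |- context [Nat.eqb ?a ?b] => destruct (Nat.eqb a b) eqn:E end.
  - constructor; auto.
  -  constructor; auto.
    match goal with |- occurs_term ?a ?b = false => destruct (occurs_term a b) eqn:E2; auto end.
    destruct (occurs_subst_term _ _ _ _ E2) as [[H1 _]|H1]; congruence.
Qed.

Fixpoint fvs_t (t : term) : list nat :=
  match t with
  | tvar i => [i]
  | tzero => []
  | tsucc u => fvs_t u
  | tplus u v | ttimes u v => fvs_t u ++ fvs_t v
  end.

Fixpoint fvs (f : formula) : list nat :=
  match f with
  | feq u v | fle u v => fvs_t u ++ fvs_t v
  | fneg g => fvs g
  | fimp g h => fvs g ++ fvs h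
  | fall i g => filter (fun j => negb (Nat.eqb j i)) (fvs g)
  end.

Lemma occurs_fvs v t : occurs_term v t = true -> In v (fvs_t t).
Proof.
  induction t; simpl; intros H; try discriminate; auto.
  - left; apply Nat.eqb_eq in H; auto.
  - apply in_or_app; apply orb_true_iff in H; intuition.
  - apply in_or_app; apply orb_true_iff in H; intuition.
Qed.

Lemma free_in_fvs v f : free_in v f = true -> In v (fvs f).
Proof.
  induction f; simpl; intros H.
  - apply in_or_app; apply orb_true_iff in H; destruct H; [left|right]; apply occurs_fvs; auto.
  - apply in_or_app; apply orb_true_iff in H; destruct H; [left|right]; apply occurs_fvs; auto.
  - auto.
  - apply in_or_app; apply orb_true_iff in H; intuition.
  - destruct (Nat.eqb n v) eqn:E; try discriminate.
    apply filter_In; split; auto. rewrite Nat.eqb_sym, E; auto.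
Qed.

Fixpoint iterS (n : nat) (t : term) : term :=
  match n with 0 => t | S m => tsucc (iterS m t) end.

Lemma numeral_iterS n : numeral n = iterS n tzero.
Proof. induction n; simpl; auto; rewrite ?IHn; auto. Qed.

Lemma iterS_succ n t : iterS n (tsucc t) = iterS (S n) t.
Proof. induction n; simpl; auto; rewrite ?IHn; auto. Qed.

End MP1.
Import MP1.

Module MP2.

Definition fdisj (a b : formula) : formula := fimp (fneg a) b.
Definition fbot : formula := fneg (feq tzero tzero).

Section Prop_logic.
Variable T : formula -> Prop.

Lemma mp1 A B : provable T A -> provable T (fimp A B) -> provable T B.
Proof. intros H1 H2; exact (PMP T A B H1 H2). Qed.

Lemma prv_id A : provable T (fimp A A).
Proof.
  eapply mp1; [apply PAx, (LA1 A A)|].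
  eapply mp1; [apply PAx, (LA1 A (fimp A A))|].
  apply PAx, LA2.
Qed.

Inductive pprov (G : list formula) : formula -> Prop :=
| pp_hyp A : In A G -> pprov G A
| pp_thm A : provable T A -> pprov G A
| pp_mp A B : pprov G A -> pprov G (fimp A B) -> pprov G B.

Lemma pp_ax G A : logical_axiom A -> pprov G A.
Proof. intros; apply pp_thm, PAx; auto. Qed.

Lemma deduction G A B : pprov (A :: G) B -> pprov G (fimp A B).
Proof.
  intros H; induction H.
  - destruct H as [H|H].
    + subst; apply pp_thm, prv_id.
    + eapply pp_mp; [apply pp_hyp; eauto| apply pp_ax, LA1].
  - eapply pp_mp; [apply pp_thm; eauto| apply pp_ax, LA1].
  - eapply pp_mp; [exact IHpprov1|].
    eapply pp_mp; [exact IHpprov2| apply pp_ax, LA2].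
Qed.

Lemma pprov_nil A : pprov [] A -> provable T A.
Proof. intros H; induction H; auto. destruct H. exact (mp1 _ _ IHpprov1 IHpprov2). Qed.

Lemma pprov_weaken G A : pprov G A -> forall G', incl G G' -> pprov G' A.
Proof.
  intros H; induction H; intros G' Hi.
  - apply pp_hyp; auto.
  - apply pp_thm; auto.
  - eapply pp_mp; eauto.
Qed.

Ltac hyp := apply pp_hyp; simpl; tauto.

Lemma L_nn_elim B : provable T (fimp (fneg (fneg B)) B).
Proof.
  apply pprov_nil, deduction.
  eapply pp_mp; [| eapply pp_mp; [| apply pp_ax, (LA3 (fneg B) B)]].
  - apply pp_thm, prv_id.
  - (eapply pp_mp; [|apply pp_ax, LA1]; hyp).
Qed.

Lemma L_nn_intro B : provable T (fimp B (fneg (fneg B))).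
Proof.
  apply pprov_nil, deduction.
  eapply pp_mp; [| eapply pp_mp; [| apply pp_ax, (LA3 B (fneg (fneg B)))]].
  - (eapply pp_mp; [|apply pp_ax, LA1]; hyp).
  - apply pp_thm, L_nn_elim.
Qed.

Lemma L_neg_imp A B : provable T (fimp (fneg A) (fimp A B)).
Proof.
  apply pprov_nil, deduction, deduction.
  eapply pp_mp; [| eapply pp_mp; [| apply pp_ax, (LA3 A B)]].
  - (eapply pp_mp; [|apply pp_ax, LA1]; hyp).
  - (eapply pp_mp; [|apply pp_ax, LA1]; hyp).
Qed.

Lemma L_contra1 A B : provable T (fimp (fimp (fneg B) (fneg A)) (fimp A B)).
Proof.
  apply pprov_nil, deduction, deduction.
  eapply pp_mp; [| eapply pp_mp; [| apply pp_ax, (LA3 A B)]].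
  - (eapply pp_mp; [|apply pp_ax, LA1]; hyp).
  - hyp.
Qed.

Lemma L_contra2 A B : provable T (fimp (fimp A B) (fimp (fneg B) (fneg A))).
Proof.
  apply pprov_nil, deduction.
  eapply pp_mp; [| apply pp_thm, L_contra1].
  apply deduction.
  eapply pp_mp; [| apply pp_thm, L_nn_intro].
  eapply pp_mp; [| hyp].
  eapply pp_mp; [hyp| apply pp_thm, L_nn_elim].
Qed.

Lemma L_imp_neg A B : provable T (fimp A (fimp (fneg B) (fneg (fimp A B)))).
Proof.
  apply pprov_nil, deduction.
  eapply pp_mp; [| apply pp_thm, L_contra2].
  apply deduction. eapply pp_mp; [| hyp]. hyp.
Qed.

Lemma L_cases A B : provable T (fimp (fimp A B) (fimp (fimp (fneg A) B) B)).
Proof.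
  apply pprov_nil, deduction, deduction.
  eapply pp_mp; [| eapply pp_mp; [| apply pp_ax, (LA3 A B)]].
  - apply deduction. eapply pp_mp; [| apply pp_thm, L_nn_elim].
    eapply pp_mp; [| (eapply pp_mp; [|apply pp_thm, L_contra2]; hyp)]. hyp.
  - eapply pp_mp; [| apply pp_thm, L_contra2]. hyp.
Qed.

Inductive pform := PAt (n : nat) | PNeg (p : pform) | PImp (p q : pform).

Fixpoint interp (l : list formula) (p : pform) : formula :=
  match p with
  | PAt n => nth n l fbot
  | PNeg q => fneg (interp l q)
  | PImp q r => fimp (interp l q) (interp l r)
  end.

Fixpoint evalp (v : nat -> bool) (p : pform) : bool :=
  match p with
  | PAt n => v n
  | PNeg q => negb (evalp v q)
  | PImp q r => implb (evalp v q) (evalp v r)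
  end.

Fixpoint maxat (p : pform) : nat :=
  match p with
  | PAt n => n
  | PNeg q => maxat q
  | PImp q r => Nat.max (maxat q) (maxat r)
  end.

Definition lit (l : list formula) (v : nat -> bool) (i : nat) : formula :=
  if v i then nth i l fbot else fneg (nth i l fbot).

Definition sgn (v : nat -> bool) (p : pform) (l : list formula) : formula :=
  if evalp v p then interp l p else fneg (interp l p).

Lemma kalmar l v p n : maxat p < n -> pprov (map (lit l v) (seq 0 n)) (sgn v p l).
Proof.
  unfold sgn; induction p; simpl; intros Hn.
  - apply pp_hyp. replace (if v n0 then nth n0 l fbot else fneg (nth n0 l fbot)) with (lit l v n0) by auto.
    apply in_map, in_seq; lia.
  - specialize (IHp Hn). destruct (evalp v p); simpl; auto.
    eapply pp_mp; [exact IHp| apply pp_thm, L_nn_intro].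
  - assert (H1 : maxat p1 < n) by lia. assert (H2 : maxat p2 < n) by lia.
    specialize (IHp1 H1); specialize (IHp2 H2).
    destruct (evalp v p1); destruct (evalp v p2); simpl.
    + eapply pp_mp; [exact IHp2| apply pp_ax, LA1].
    + eapply pp_mp; [exact IHp2|]. eapply pp_mp; [exact IHp1| apply pp_thm, L_imp_neg].
    + eapply pp_mp; [exact IHp2| apply pp_ax, LA1].
    + eapply pp_mp; [exact IHp1| apply pp_thm, L_neg_imp].
Qed.

Definition updv (v : nat -> bool) (j : nat) (b : bool) : nat -> bool :=
  fun i => if Nat.eqb i j then b else v i.

Lemma map_lit_ext l v v' j k : (forall i, j <= i -> v i = v' i) ->
  map (lit l v) (seq j k) = map (lit l v') (seq j k).
Proof.
  intros H; apply map_ext_in; intros i Hi; apply in_seq in Hi; unfold lit; rewrite H; auto; lia.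
Qed.

Lemma kalmar_elim l P n : (forall v, pprov (map (lit l v) (seq 0 n)) P) -> pprov [] P.
Proof.
  intros H.
  assert (Hg : forall j, j <= n -> forall v, pprov (map (lit l v) (seq j (n - j))) P).
  { induction j; intros Hj v.
    - replace (n - 0) with n by lia; auto.
    - assert (Hs : forall b, map (lit l (updv v j b)) (seq j (n - j)) =
                lit l (updv v j b) j :: map (lit l v) (seq (S j) (n - S j))).
      { intros b. replace (n - j) with (S (n - S j)) by lia. simpl. f_equal.
        apply map_lit_ext. intros i Hi. unfold updv. replace (Nat.eqb i j) with false; auto.
        symmetry; apply Nat.eqb_neq; lia. }
      assert (Ht := IHj ltac:(lia) (updv v j true)).
      assert (Hf := IHj ltac:(lia) (updv v j false)).
      rewrite Hs in Ht, Hf. unfold lit at 1 in Ht. unfold lit at 1 in Hf.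
      unfold updv at 1 in Ht. unfold updv at 1 in Hf. rewrite Nat.eqb_refl in Ht, Hf.
      apply deduction in Ht; apply deduction in Hf.
      eapply pp_mp; [exact Hf|]. eapply pp_mp; [exact Ht|]. apply pp_thm, L_cases. }
  specialize (Hg n (le_n n) (fun _ => true)). replace (n - n) with 0 in Hg by lia. exact Hg.
Qed.

Fixpoint allv (n : nat) : list (list bool) :=
  match n with
  | 0 => [[]]
  | S m => map (cons true) (allv m) ++ map (cons false) (allv m)
  end.

Definition vl (b : list bool) : nat -> bool := fun i => nth i b false.

Definition tautb (p : pform) : bool :=
  forallb (fun b => evalp (vl b) p) (allv (S (maxat p))).

Lemma evalp_ext p v v' : (forall i, i <= maxat p -> v i = v' i) -> evalp v p = evalp v' p.
Proof.
  induction p; simpl; intros H.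
  - apply H; lia.
  - rewrite IHp; auto.
  - rewrite IHp1, IHp2; auto; intros; apply H; lia.
Qed.

Lemma allv_in v n : In (map v (seq 0 n)) (allv n) .
Proof.
  revert v; induction n; intros v; simpl; auto.
  assert (Hs : map v (seq 1 n) = map (fun i => v (S i)) (seq 0 n)).
  { rewrite <- seq_shift, map_map; auto. }
  rewrite Hs. apply in_or_app. destruct (v 0); [left|right]; apply in_map; apply IHn.
Qed.

Lemma tautb_ok p : tautb p = true -> forall v, evalp v p = true.
Proof.
  unfold tautb; intros H v. rewrite forallb_forall in H.
  specialize (H _ (allv_in v (S (maxat p)))).
  rewrite <- H. apply evalp_ext. intros i Hi. unfold vl.
  rewrite nth_indep with (d' := v 0) by (rewrite length_map, length_seq; lia).
  rewrite map_nth, seq_nth; auto; lia.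
Qed.

Lemma taut_ok l p : tautb p = true -> provable T (interp l p).
Proof.
  intros H. apply pprov_nil. apply (kalmar_elim l _ (S (maxat p))).
  intros v. assert (K := kalmar l v p (S (maxat p)) (Nat.lt_succ_diag_r _)).
  unfold sgn in K. rewrite (tautb_ok p H v) in K. exact K.
Qed.

Lemma mp2 A B C : provable T A -> provable T B -> provable T (fimp A (fimp B C)) -> provable T C.
Proof. intros H1 H2 H3. exact (mp1 _ _ H2 (mp1 _ _ H1 H3)). Qed.

Lemma mp3 A B C D : provable T A -> provable T B -> provable T C ->
  provable T (fimp A (fimp B (fimp C D))) -> provable T D.
Proof. intros H1 H2 H3 H4. exact (mp1 _ _ H3 (mp1 _ _ H2 (mp1 _ _ H1 H4))). Qed.

End Prop_logic.

Ltac memb a l :=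
  match l with
  | context [cons a _] => constr:(true)
  | _ => constr:(false)
  end.

Ltac collect f l :=
  match f with
  | fneg ?a => collect a l
  | fimp ?a ?b => let l1 := collect a l in collect b l1
  | fand ?a ?b => let l1 := collect a l in collect b l1
  | fiff ?a ?b => let l1 := collect a l in collect b l1
  | fdisj ?a ?b => let l1 := collect a l in collect b l1
  | _ => let b := memb f l in match b with true => l | false => constr:(cons f l) end
  end.

Ltac rev_l l acc :=
  match l with
  | nil => acc
  | cons ?a ?l' => rev_l l' constr:(cons a acc)
  end.

Ltac lookup a l :=
  match l with
  | cons a _ => constr:(0)
  | cons _ ?l' => let n := lookup a l' in constr:(S n)
  end.

Ltac reify f l :=
  match f with
  | fneg ?a => let p := reify a l in constr:(PNeg p)
  | fimp ?a ?b => let p := reify a l in let q := reify b l in constr:(PImp p q)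
  | fand ?a ?b => let p := reify a l in let q := reify b l in constr:(PNeg (PImp p (PNeg q)))
  | fiff ?a ?b => let p := reify a l in let q := reify b l in
                  constr:(PNeg (PImp (PImp p q) (PNeg (PImp q p))))
  | fdisj ?a ?b => let p := reify a l in let q := reify b l in constr:(PImp (PNeg p) q)
  | _ => let i := lookup f l in constr:(PAt i)
  end.

Ltac taut :=
  try unfold v0, v1, v2;
  match goal with
  | |- provable ?T ?f =>
      let l0 := collect f (@nil formula) in
      let l := rev_l l0 (@nil formula) in
      let p := reify f l in
      change (provable T (interp l p)); apply taut_ok; vm_compute; reflexivity
  end.

Section Test.
Variable T : formula -> Prop.
Goal forall A B C, provable T (fimp (fand A B) (fdisj C (fiff B B))).
Proof. intros. taut. Qed.
End Test.

End MP2.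
Import MP2.

Module MP3.

Lemma mp4 T A B C D E : provable T A -> provable T B -> provable T C -> provable T D ->
  provable T (fimp A (fimp B (fimp C (fimp D E)))) -> provable T E.
Proof. intros H1 H2 H3 H4 H5. exact (mp1 _ _ _ H4 (mp1 _ _ _ H3 (mp1 _ _ _ H2 (mp1 _ _ _ H1 H5)))). Qed.

Ltac tk1 h := eapply mp1; [exact h| taut].
Ltac tk2 h1 h2 := eapply mp2; [exact h1| exact h2| taut].
Ltac tk3 h1 h2 h3 := eapply mp3; [exact h1| exact h2| exact h3| taut].
Ltac tk4 h1 h2 h3 h4 := eapply mp4; [exact h1| exact h2| exact h3| exact h4| taut].

Lemma subst_term_var_id x u : subst_term x (tvar x) u = u.
Proof.
  induction u; simpl; try congruence.
  destruct (Nat.eqb n x) eqn:E; auto. apply Nat.eqb_eq in E; subst; auto.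
Qed.

Lemma subst_var_id x f : subst x (tvar x) f = f.
Proof.
  induction f; simpl; rewrite ?subst_term_var_id; try congruence.
  destruct (Nat.eqb n x); congruence.
Qed.

Lemma free_for_var_self x f : free_for (tvar x) x f = true.
Proof.
  induction f; simpl; auto.
  - rewrite IHf1, IHf2; auto.
  - destruct (Nat.eqb n x) eqn:E; simpl; auto.
    destruct (free_in x f); simpl; auto. rewrite IHf. rewrite Nat.eqb_sym, E. auto.
Qed.

Section Quant.
Variable T : formula -> Prop.

Lemma inst x t A : free_for t x A = true -> provable T (fall x A) -> provable T (subst x t A).
Proof. intros Hf H. eapply mp1; [exact H| apply PAx, LA4; auto]. Qed.

Lemma inst_closed x t A : closed_t t -> provable T (fall x A) -> provable T (subst x t A).
Proof. intros; apply inst; auto; apply free_for_closed; auto. Qed.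

Lemma qf_inst x t A : qf A = true -> provable T A -> provable T (subst x t A).
Proof. intros; apply inst; [apply free_for_qf; auto| apply PGen; auto]. Qed.

Lemma all_elim_self x A : provable T (fimp (fall x A) A).
Proof.
  assert (H := PAx T _ (LA4 x (tvar x) A (free_for_var_self x A))).
  rewrite subst_var_id in H; exact H.
Qed.

Lemma all_intro x A B : free_in x B = false -> provable T (fimp B A) -> provable T (fimp B (fall x A)).
Proof.
  intros Hx H. eapply mp1; [apply PGen, H| apply PAx, LA5; auto].
Qed.

Lemma chain A B C : provable T (fimp A B) -> provable T (fimp B C) -> provable T (fimp A C).
Proof. intros H1 H2. tk2 H1 H2. Qed.

Lemma all_mono x A B : provable T (fimp A B) -> provable T (fimp (fall x A) (fall x B)).
Proof.
  intros H. apply all_intro. simpl; rewrite Nat.eqb_refl; auto.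
  eapply chain; [apply all_elim_self| exact H].
Qed.

Lemma all_iff x A B : provable T (fiff A B) -> provable T (fiff (fall x A) (fall x B)).
Proof.
  intros H. assert (H1 : provable T (fimp A B)) by tk1 H.
  assert (H2 : provable T (fimp B A)) by tk1 H.
  apply all_mono with (x := x) in H1; apply all_mono with (x := x) in H2. tk2 H1 H2.
Qed.

Lemma ex_intro_t x t A : free_for t x A = true -> provable T (fimp (subst x t A) (fex x A)).
Proof.
  intros Hf. assert (H := PAx T _ (LA4 x t (fneg A) Hf)). simpl in H.
  unfold fex. tk1 H.
Qed.

Lemma ex_elim x A B : free_in x B = false -> provable T (fimp A B) -> provable T (fimp (fex x A) B).
Proof.
  intros Hx H. assert (H1 : provable T (fimp (fneg B) (fneg A))) by tk1 H.
  apply all_intro with (x := x) in H1; [|simpl; auto]. unfold fex. tk1 H1.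
Qed.

Lemma ex_iff x A B : provable T (fiff A B) -> provable T (fiff (fex x A) (fex x B)).
Proof.
  intros H. assert (H1 : provable T (fiff (fneg A) (fneg B))) by tk1 H.
  apply all_iff with (x := x) in H1. unfold fex. tk1 H1.
Qed.

Definition tmax (t : term) : nat := fold_right Nat.max 0 (fvs_t t).

Lemma tmax_occ i t : occurs_term i t = true -> i <= tmax t.
Proof.
  unfold tmax; intros H; apply occurs_fvs in H. induction (fvs_t t); simpl in *; [tauto|].
  destruct H; subst; [lia|]. specialize (IHl H); lia.
Qed.

Lemma fresh_notocc i t : tmax t < i -> occurs_term i t = false.
Proof.
  intros H; destruct (occurs_term i t) eqn:E; auto. apply tmax_occ in E; lia.
Qed.

Ltac eqb_simpl :=
  repeat match goal with
  | |- context [Nat.eqb ?a ?a] => rewrite (Nat.eqb_refl a)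
  | |- context [Nat.eqb ?a ?b] => rewrite (proj2 (Nat.eqb_neq a b)) by lia
  end.

Ltac notocc_simpl :=
  repeat match goal with
  | |- context [subst_term ?i ?s ?a] =>
      rewrite (subst_term_notocc i s a) by (apply fresh_notocc; lia)
  end.

Ltac ssimpl := repeat progress (cbn [subst subst_term]; eqb_simpl; notocc_simpl).

Lemma E_refl a : provable T (feq a a).
Proof.
  assert (H := qf_inst 0 a (feq (tvar 0) (tvar 0)) eq_refl (PAx T _ (LEqRefl 0))). exact H.
Qed.

Lemma E_sym a b : provable T (fimp (feq a b) (feq b a)).
Proof.
  remember (S (tmax a + tmax b)) as N eqn:HN.
  assert (H0 : provable T (fimp (feq (tvar N) (tvar (S N))) (feq (tvar (S N)) (tvar N)))).
  { assert (H1 := PAx T _ (LEqEq N (S N) N)). assert (H2 := PAx T _ (LEqRefl N)). tk2 H1 H2. }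
  apply (qf_inst N a) in H0; auto. apply (qf_inst (S N) b) in H0; auto.
  revert H0; ssimpl; auto.
Qed.

Definition isub (l : list (nat * term)) (f : formula) : formula :=
  fold_left (fun g p => subst (fst p) (snd p) g) l f.

Lemma isub_inst l f : qf f = true -> provable T f -> provable T (isub l f).
Proof.
  revert f; induction l as [|[x t] l IH]; simpl; intros f Hq H; auto.
  apply IH; [apply qf_subst; auto| apply qf_inst; auto].
Qed.

Ltac isimpl := cbn [isub fold_left fst snd]; ssimpl.

Lemma E_trans a b c : provable T (fimp (feq a b) (fimp (feq b c) (feq a c))).
Proof.
  remember (S (tmax a + tmax b + tmax c)) as N eqn:HN.
  assert (H0 : provable T (fimp (feq (tvar N) (tvar (S N)))
     (fimp (feq (tvar (S N)) (tvar (S (S N)))) (feq (tvar N) (tvar (S (S N))))))).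
  { assert (H1 := E_sym (tvar N) (tvar (S N))). assert (H2 := PAx T _ (LEqEq (S N) N (S (S N)))). tk2 H1 H2. }
  apply (isub_inst [(N, a); (S N, b); (S (S N), c)]) in H0; auto.
  revert H0; isimpl; auto.
Qed.

Lemma E_succ a b : provable T (fimp (feq a b) (feq (tsucc a) (tsucc b))).
Proof.
  remember (S (tmax a + tmax b)) as N eqn:HN.
  assert (H0 := PAx T _ (LEqSucc N (S N))).
  apply (isub_inst [(N, a); (S N, b)]) in H0; auto.
  revert H0; isimpl; auto.
Qed.

Lemma E_plus a b c d : provable T (fimp (feq a b) (fimp (feq c d) (feq (tplus a c) (tplus b d)))).
Proof.
  remember (S (tmax a + tmax b + tmax c + tmax d)) as N eqn:HN.
  assert (H0 : provable T (fimp (feq (tvar N) (tvar (S N))) (fimp (feq (tvar (S (S N))) (tvar (S (S (S N)))))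
     (feq (tplus (tvar N) (tvar (S (S N)))) (tplus (tvar (S N)) (tvar (S (S (S N))))))))).
  { assert (H1 := PAx T _ (LEqPlus1 N (S N) (S (S N)))).
    assert (H2 := PAx T _ (LEqPlus2 (S (S N)) (S (S (S N))) (S N))).
    assert (H3 := E_trans (tplus (tvar N) (tvar (S (S N)))) (tplus (tvar (S N)) (tvar (S (S N))))
                          (tplus (tvar (S N)) (tvar (S (S (S N)))))).
    tk3 H1 H2 H3. }
  apply (isub_inst [(N, a); (S N, b); (S (S N), c); (S (S (S N)), d)]) in H0; auto.
  revert H0; isimpl; auto.
Qed.

Lemma E_times a b c d : provable T (fimp (feq a b) (fimp (feq c d) (feq (ttimes a c) (ttimes b d)))).
Proof.
  remember (S (tmax a + tmax b + tmax c + tmax d)) as N eqn:HN.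
  assert (H0 : provable T (fimp (feq (tvar N) (tvar (S N))) (fimp (feq (tvar (S (S N))) (tvar (S (S (S N)))))
     (feq (ttimes (tvar N) (tvar (S (S N)))) (ttimes (tvar (S N)) (tvar (S (S (S N))))))))).
  { assert (H1 := PAx T _ (LEqTimes1 N (S N) (S (S N)))).
    assert (H2 := PAx T _ (LEqTimes2 (S (S N)) (S (S (S N))) (S N))).
    assert (H3 := E_trans (ttimes (tvar N) (tvar (S (S N)))) (ttimes (tvar (S N)) (tvar (S (S N))))
                          (ttimes (tvar (S N)) (tvar (S (S (S N)))))).
    tk3 H1 H2 H3. }
  apply (isub_inst [(N, a); (S N, b); (S (S N), c); (S (S (S N)), d)]) in H0; auto.
  revert H0; isimpl; auto.
Qed.

Lemma E_le a b c d : provable T (fimp (feq a b) (fimp (feq c d) (fimp (fle a c) (fle b d)))).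
Proof.
  remember (S (tmax a + tmax b + tmax c + tmax d)) as N eqn:HN.
  assert (H0 : provable T (fimp (feq (tvar N) (tvar (S N))) (fimp (feq (tvar (S (S N))) (tvar (S (S (S N)))))
     (fimp (fle (tvar N) (tvar (S (S N)))) (fle (tvar (S N)) (tvar (S (S (S N))))))))).
  { assert (H1 := PAx T _ (LEqLe1 N (S N) (S (S N)))).
    assert (H2 := PAx T _ (LEqLe2 (S (S N)) (S (S (S N))) (S N))).
    tk2 H1 H2. }
  apply (isub_inst [(N, a); (S N, b); (S (S N), c); (S (S (S N)), d)]) in H0; auto.
  revert H0; isimpl; auto.
Qed.

Lemma E_eq a b c d : provable T (fimp (feq a b) (fimp (feq c d) (fimp (feq a c) (feq b d)))).
Proof.
  assert (H1 := E_sym a b). assert (H2 := E_trans b a c). assert (H3 := E_trans b c d).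
  tk3 H1 H2 H3.
Qed.

Lemma cong x t s : provable T (fimp (feq (tvar x) t) (feq s (subst_term x t s))).
Proof.
  induction s; simpl.
  - destruct (Nat.eqb n x) eqn:E.
    + apply Nat.eqb_eq in E; subst. apply prv_id.
    + assert (H := E_refl (tvar n)). tk1 H.
  - assert (H := E_refl tzero). tk1 H.
  - assert (H := E_succ s (subst_term x t s)). tk2 IHs H.
  - assert (H := E_plus s1 (subst_term x t s1) s2 (subst_term x t s2)). tk3 IHs1 IHs2 H.
  - assert (H := E_times s1 (subst_term x t s1) s2 (subst_term x t s2)). tk3 IHs1 IHs2 H.
Qed.

Lemma leibniz x t f : closed_t t -> provable T (fimp (feq (tvar x) t) (fiff f (subst x t f))).
Proof.
  intros Ht; induction f; simpl.
  - assert (H1 := cong x t t0). assert (H2 := cong x t t1).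
    assert (H3 := E_eq t0 (subst_term x t t0) t1 (subst_term x t t1)).
    assert (H4 := E_eq (subst_term x t t0) t0 (subst_term x t t1) t1).
    assert (H5 := E_sym t0 (subst_term x t t0)). assert (H6 := E_sym t1 (subst_term x t t1)).
    eapply mp4; [exact H1|exact H2|exact H3|exact H4|]. eapply mp2; [exact H5| exact H6| taut].
  - assert (H1 := cong x t t0). assert (H2 := cong x t t1).
    assert (H3 := E_le t0 (subst_term x t t0) t1 (subst_term x t t1)).
    assert (H4 := E_le (subst_term x t t0) t0 (subst_term x t t1) t1).
    assert (H5 := E_sym t0 (subst_term x t t0)). assert (H6 := E_sym t1 (subst_term x t t1)).
    eapply mp4; [exact H1|exact H2|exact H3|exact H4|]. eapply mp2; [exact H5| exact H6| taut].
  - tk1 IHf.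
  - tk2 IHf1 IHf2.
  - destruct (Nat.eqb n x) eqn:E.
    + taut.
    + assert (Hn : free_in n (feq (tvar x) t) = false).
      { simpl. rewrite Nat.eqb_sym, E, Ht. auto. }
      assert (H1 : provable T (fimp (fand (feq (tvar x) t) (fall n f)) (fall n (subst x t f)))).
      { apply all_intro. simpl in Hn |- *. rewrite Hn, Nat.eqb_refl. auto.
        assert (H2 := all_elim_self n f). tk2 H2 IHf. }
      assert (H3 : provable T (fimp (fand (feq (tvar x) t) (fall n (subst x t f))) (fall n f))).
      { apply all_intro. simpl in Hn |- *. rewrite Hn, Nat.eqb_refl. auto.
        assert (H2 := all_elim_self n (subst x t f)). tk2 H2 IHf. }
      tk2 H1 H3.
Qed.

End Quant.

End MP3.
Import MP3.

Module MP4.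

Ltac eqb_simpl :=
  repeat match goal with
  | |- context [Nat.eqb ?a ?a] => rewrite (Nat.eqb_refl a)
  | |- context [Nat.eqb ?a ?b] => rewrite (proj2 (Nat.eqb_neq a b)) by lia
  end.
Ltac notocc_simpl :=
  repeat match goal with
  | |- context [subst_term ?i ?s ?a] =>
      rewrite (subst_term_notocc i s a) by (first [apply fresh_notocc; lia | apply closed_numeral | auto])
  end.
Ltac ssimpl := repeat progress (cbn [subst subst_term]; eqb_simpl; notocc_simpl).
Ltac isimpl := unfold v0, v1, v2; cbn [isub fold_left fst snd]; ssimpl.

Lemma qf_inst' T x t A : provable T A -> qf A = true -> provable T (subst x t A).
Proof. intros; apply qf_inst; auto. Qed.
Lemma isub_inst' T l A : provable T A -> qf A = true -> provable T (isub l A).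
Proof. intros; apply isub_inst; auto. Qed.

Fixpoint ors (l : list formula) : formula :=
  match l with [] => fbot | a :: l' => fdisj a (ors l') end.

Definition eqs (v : term) (j k : nat) : list formula := map (fun i => feq v (numeral i)) (seq j k).

Lemma subst_ors_eqs x t j k : subst x t (ors (eqs (tvar x) j k)) = ors (eqs t j k).
Proof.
  revert j; induction k; intros j; simpl; auto.
  rewrite Nat.eqb_refl, subst_term_notocc by apply closed_numeral. specialize (IHk (S j)). unfold eqs in IHk. rewrite IHk. reflexivity.
Qed.

Lemma free_ors_eqs y t j k : occurs_term y t = false -> free_in y (ors (eqs t j k)) = false.
Proof.
  intros H; revert j; induction k; intros j; simpl; auto.
  rewrite H, closed_numeral. specialize (IHk (S j)). unfold eqs in IHk. rewrite IHk. auto.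
Qed.

Lemma qf_ors_eqs t j k : qf (ors (eqs t j k)) = true.
Proof. revert j; induction k; intros j; simpl; auto. specialize (IHk (S j)). unfold eqs in IHk. rewrite IHk. auto. Qed.

Lemma iterS_numeral n a : iterS n (numeral a) = numeral (n + a).
Proof. induction n; simpl; auto. rewrite IHn; auto. Qed.

Lemma subst_iterS x t n s : subst_term x t (iterS n s) = iterS n (subst_term x t s).
Proof. induction n; simpl; auto. rewrite IHn; auto. Qed.

Section Arith.
Variable T : formula -> Prop.
Hypothesis HB : forall f, IDelta0_axiom f -> provable T f.

Lemma B1i a : provable T (fneg (feq (tsucc a) tzero)).
Proof. assert (H := qf_inst' T 0 a _ (HB _ B1) eq_refl). exact H. Qed.

Lemma B2i a b : provable T (fimp (feq (tsucc a) (tsucc b)) (feq a b)).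
Proof.
  remember (S (S (tmax a + tmax b))) as N eqn:HN.
  assert (H := isub_inst' T [(0, tvar N); (1, tvar (S N)); (N, a); (S N, b)] _ (HB _ B2) eq_refl).
  revert H; isimpl; auto.
Qed.

Lemma B3i a : provable T (feq (tplus a tzero) a).
Proof. assert (H := qf_inst' T 0 a _ (HB _ B3) eq_refl). exact H. Qed.

Lemma B4i a b : provable T (feq (tplus a (tsucc b)) (tsucc (tplus a b))).
Proof.
  remember (S (S (tmax a + tmax b))) as N eqn:HN.
  assert (H := isub_inst' T [(0, tvar N); (1, tvar (S N)); (N, a); (S N, b)] _ (HB _ B4) eq_refl).
  revert H; isimpl; auto.
Qed.

Lemma B5i a : provable T (feq (ttimes a tzero) tzero).
Proof. assert (H := qf_inst' T 0 a _ (HB _ B5) eq_refl). exact H. Qed.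

Lemma B6i a b : provable T (feq (ttimes a (tsucc b)) (tplus (ttimes a b) a)).
Proof.
  remember (S (S (tmax a + tmax b))) as N eqn:HN.
  assert (H := isub_inst' T [(0, tvar N); (1, tvar (S N)); (N, a); (S N, b)] _ (HB _ B6) eq_refl).
  revert H; isimpl; auto.
Qed.

Lemma B7i a b : occurs_term 2 a = false -> occurs_term 2 b = false -> occurs_term 1 a = false ->
  provable T (fiff (fle a b) (fex 2 (feq (tplus v2 a) b))).
Proof.
  intros H2a H2b H1a.
  set (F := fiff (fle v0 v1) (fex 2 (feq (tplus v2 v0) v1))).
  assert (H := HB _ B7). fold F in H.
  assert (Hf1 : free_for a 0 F = true) by (simpl; rewrite H2a; auto).
  assert (H' := inst T 0 a F Hf1 (PGen _ 0 _ H)).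
  set (F' := subst 0 a F) in H'.
  assert (Hf2 : free_for b 1 F' = true) by (subst F'; simpl; rewrite H2b, orb_true_r; auto).
  assert (H'' := inst T 1 b F' Hf2 (PGen _ 1 _ H')).
  revert H''. subst F' F. unfold v0, v1, v2. cbn [subst subst_term fiff fand fex Nat.eqb].
  rewrite (subst_term_notocc 1 b a H1a). auto.
Qed.

Lemma trans_p a b c : provable T (feq a b) -> provable T (feq b c) -> provable T (feq a c).
Proof. intros H1 H2. assert (H3 := E_trans T a b c). tk3 H1 H2 H3. Qed.

Lemma sym_p a b : provable T (feq a b) -> provable T (feq b a).
Proof. intros H1. assert (H3 := E_sym T a b). tk2 H1 H3. Qed.

Lemma plus_iter z n : provable T (feq (tplus z (numeral n)) (iterS n z)).
Proof.
  induction n; simpl.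
  - apply B3i.
  - assert (H1 := B4i z (numeral n)). assert (H2 := E_succ T (tplus z (numeral n)) (iterS n z)).
    assert (H3 := mp1 _ _ _ IHn H2). eapply trans_p; eauto.
Qed.

Lemma plus_num a n : provable T (feq (tplus (numeral a) (numeral n)) (numeral (a + n))).
Proof. rewrite Nat.add_comm, <- iterS_numeral. apply plus_iter. Qed.

Lemma times_num a n : provable T (feq (ttimes (numeral a) (numeral n)) (numeral (a * n))).
Proof.
  induction n; simpl.
  - rewrite Nat.mul_0_r. apply B5i.
  - assert (H1 := B6i (numeral a) (numeral n)).
    assert (H2 := E_plus T (ttimes (numeral a) (numeral n)) (numeral (a * n)) (numeral a) (numeral a)).
    assert (H3 := mp2 _ _ _ _ IHn (E_refl T _) H2).
    assert (H4 := plus_num (a * n) a).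
    replace (a * S n) with (a * n + a) by lia. eapply trans_p; [exact H1|]. eapply trans_p; eauto.
Qed.

Lemma eval_num t : closed_t t -> provable T (feq t (numeral (eval (fun _ => 0) t))).
Proof.
  induction t; simpl; intros Ht.
  - specialize (Ht n); simpl in Ht; rewrite Nat.eqb_refl in Ht; discriminate.
  - apply E_refl.
  - assert (H := E_succ T t (numeral (eval (fun _ => 0) t))). apply (mp1 _ _ _ (IHt Ht) H).
  - assert (Ht1 : closed_t t1) by (intro i; specialize (Ht i); simpl in Ht; apply orb_false_iff in Ht; tauto).
    assert (Ht2 : closed_t t2) by (intro i; specialize (Ht i); simpl in Ht; apply orb_false_iff in Ht; tauto).
    assert (H := E_plus T t1 (numeral (eval (fun _ => 0) t1)) t2 (numeral (eval (fun _ => 0) t2))).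
    eapply trans_p; [apply (mp2 _ _ _ _ (IHt1 Ht1) (IHt2 Ht2) H)| apply plus_num].
  - assert (Ht1 : closed_t t1) by (intro i; specialize (Ht i); simpl in Ht; apply orb_false_iff in Ht; tauto).
    assert (Ht2 : closed_t t2) by (intro i; specialize (Ht i); simpl in Ht; apply orb_false_iff in Ht; tauto).
    assert (H := E_times T t1 (numeral (eval (fun _ => 0) t1)) t2 (numeral (eval (fun _ => 0) t2))).
    eapply trans_p; [apply (mp2 _ _ _ _ (IHt1 Ht1) (IHt2 Ht2) H)| apply times_num].
Qed.

Lemma iter_neq z : forall m n, m < n -> provable T (fneg (feq (iterS n z) (numeral m))).
Proof.
  induction m; intros n Hn; destruct n; try lia; simpl.
  - apply B1i.
  - assert (H1 := B2i (iterS n z) (numeral m)). assert (H2 := IHm n ltac:(lia)). tk2 H1 H2.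
Qed.

Lemma num_neq n m : n <> m -> provable T (fneg (feq (numeral n) (numeral m))).
Proof.
  intros H. destruct (proj1 (Nat.lt_gt_cases n m) H) as [H1|H1]; [|rewrite numeral_iterS; apply iter_neq; lia].
  assert (H2 := iter_neq tzero n m H1). rewrite <- numeral_iterS in H2.
  assert (H3 := E_sym T (numeral n) (numeral m)). tk2 H2 H3.
Qed.

Lemma bex_intro x t A B : free_for t x (fimp A (fneg B)) = true ->
  provable T (subst x t A) -> provable T (subst x t B) ->
  provable T (fneg (fall x (fimp A (fneg B)))).
Proof.
  intros Hf H1 H2. assert (H := PAx T _ (LA4 x t _ Hf)). simpl in H. tk3 H1 H2 H.
Qed.

Lemma bex_elim x A B C : free_in x C = false -> provable T (fimp A (fimp B C)) ->
  provable T (fimp (fneg (fall x (fimp A (fneg B)))) C).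
Proof.
  intros Hx H. assert (H1 : provable T (fimp (fneg C) (fimp A (fneg B)))) by tk1 H.
  apply (all_intro T x) in H1; [|simpl; auto]. tk1 H1.
Qed.

Lemma le_num n m : n <= m -> provable T (fle (numeral n) (numeral m)).
Proof.
  intros H. assert (H1 := B7i (numeral n) (numeral m) (closed_numeral _ _) (closed_numeral _ _) (closed_numeral _ _)).
  assert (H2 := ex_intro_t T 2 (numeral (m - n)) (feq (tplus v2 (numeral n)) (numeral m)) eq_refl).
  revert H2; unfold v2; ssimpl; intros H2.
  assert (H3 := plus_num (m - n) n). replace (m - n + n) with m in H3 by lia.
  tk3 H1 H2 H3.
Qed.

Lemma nle_num n m : m < n -> provable T (fneg (fle (numeral n) (numeral m))).
Proof.
  intros H. assert (H1 := B7i (numeral n) (numeral m) (closed_numeral _ _) (closed_numeral _ _) (closed_numeral _ _)).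
  assert (H2 : provable T (fimp (feq (tplus v2 (numeral n)) (numeral m)) fbot)).
  { assert (H3 := plus_iter v2 n). assert (H4 := iter_neq v2 m n H).
    assert (H5 := E_eq T (tplus v2 (numeral n)) (iterS n v2) (numeral m) (numeral m)).
    assert (H6 := E_refl T (numeral m)). tk4 H3 H4 H5 H6. }
  apply (ex_elim T 2) in H2; [|simpl; auto].
  assert (H7 := E_refl T tzero). unfold fbot in *. tk3 H1 H2 H7.
Qed.

Lemma one_plus : provable T (feq (tplus (tsucc tzero) v0) (tsucc v0)).
Proof.
  assert (H := HB _ (Ind 0 (feq (tplus (tsucc tzero) v0) (tsucc v0)) (D0eq _ _))).
  unfold v0 in *; cbn [subst subst_term Nat.eqb] in H.
  assert (Hb := B3i (tsucc tzero)).
  assert (H1 := B4i (tsucc tzero) (tvar 0)).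
  assert (H2 := E_succ T (tplus (tsucc tzero) (tvar 0)) (tsucc (tvar 0))).
  assert (H3 := E_trans T (tplus (tsucc tzero) (tsucc (tvar 0))) (tsucc (tplus (tsucc tzero) (tvar 0))) (tsucc (tsucc (tvar 0)))).
  assert (Hs : provable T (fimp (feq (tplus (tsucc tzero) (tvar 0)) (tsucc (tvar 0)))
                              (feq (tplus (tsucc tzero) (tsucc (tvar 0))) (tsucc (tsucc (tvar 0)))))) by tk3 H1 H2 H3.
  apply (PGen _ 0) in Hs.
  assert (H4 := mp2 _ _ _ _ Hb Hs H).
  assert (H5 := all_elim_self T 0 (feq (tplus (tsucc tzero) (tvar 0)) (tsucc (tvar 0)))).
  exact (mp1 _ _ _ H4 H5).
Qed.

Definition caseF (x y : nat) : formula :=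
  fdisj (feq (tvar x) tzero) (fneg (fall y (fimp (fle (tvar y) (tvar x)) (fneg (feq (tvar x) (tsucc (tvar y))))))).

Lemma le_succ : provable T (fle v0 (tsucc v0)).
Proof.
  assert (H1 := B7i v0 (tsucc v0) eq_refl eq_refl eq_refl).
  assert (H2 := ex_intro_t T 2 (tsucc tzero) (feq (tplus v2 v0) (tsucc v0)) eq_refl).
  revert H2; unfold v0, v2; ssimpl; intros H2.
  assert (H3 := one_plus). tk3 H1 H2 H3.
Qed.

Lemma case01 : provable T (caseF 0 1).
Proof.
  assert (H := HB _ (Ind 0 (caseF 0 1)
     (D0imp _ _ (D0neg _ (D0eq _ _)) (D0neg _ (D0ball 1 (tvar 0) _ eq_refl (D0neg _ (D0eq _ _))))))).
  unfold caseF in *; cbn [subst subst_term Nat.eqb] in H.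
  assert (Hb := E_refl T tzero).
  assert (Hs : provable T (fneg (fall 1 (fimp (fle (tvar 1) (tsucc (tvar 0)))
                   (fneg (feq (tsucc (tvar 0)) (tsucc (tvar 1)))))))).
  { apply (bex_intro 1 (tvar 0)); [reflexivity| |].
    - cbn [subst subst_term Nat.eqb]. exact le_succ.
    - cbn [subst subst_term Nat.eqb]. apply E_refl. }
  assert (Hs' : provable T (fall 0 (fimp (fdisj (feq (tvar 0) tzero)
         (fneg (fall 1 (fimp (fle (tvar 1) (tvar 0)) (fneg (feq (tvar 0) (tsucc (tvar 1))))))))
        (fdisj (feq (tsucc (tvar 0)) tzero)
         (fneg (fall 1 (fimp (fle (tvar 1) (tsucc (tvar 0))) (fneg (feq (tsucc (tvar 0)) (tsucc (tvar 1))))))))))).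
  { apply PGen. tk1 Hs. }
  assert (Hb' : provable T (fdisj (feq tzero tzero) (fneg (fall 1 (fimp (fle (tvar 1) tzero) (fneg (feq tzero (tsucc (tvar 1))))))))) by tk1 Hb.
  assert (H4 := mp2 _ _ _ _ Hb' Hs' H).
  assert (H5 := all_elim_self T 0 (caseF 0 1)). unfold caseF in H5.
  exact (mp1 _ _ _ H4 H5).
Qed.

Lemma case_var x : x <> 1 -> provable T (caseF x 1).
Proof.
  intros Hx. assert (Hf : free_for (tvar x) 0 (caseF 0 1) = true).
  { unfold caseF, fdisj. cbn [free_for free_in occurs_term Nat.eqb negb orb andb].
    rewrite (proj2 (Nat.eqb_neq x 1) Hx). reflexivity. }
  assert (H := inst T 0 (tvar x) _ Hf (PGen _ 0 _ case01)).
  revert H. unfold caseF. cbn [subst subst_term Nat.eqb]. auto.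
Qed.

End Arith.


End MP4.
Import MP4.

Module MP4b.

Ltac nrm := unfold eqs, v0, v1, v2 in *; cbn [ors map seq numeral] in *.

Section Q.
Variable T : formula -> Prop.
Hypothesis HB : forall f, IDelta0_axiom f -> provable T f.

Lemma E_tri a b c d : provable T (fimp (feq a b) (fimp (feq a c) (fimp (feq b d) (feq c d)))).
Proof.
  assert (H1 := E_sym T a c). assert (H2 := E_trans T c a b). assert (H3 := E_trans T c b d).
  tk3 H1 H2 H3.
Qed.

Lemma shift j k : provable T (fimp (feq v0 (tsucc v1)) (fimp (ors (eqs v1 j k)) (ors (eqs v0 (S j) k)))).
Proof.
  revert j; induction k; intros j.
  - nrm. taut.
  - assert (IH := IHk (S j)).
    assert (H1 := E_succ T v1 (numeral j)).
    assert (H2 := E_trans T v0 (tsucc v1) (tsucc (numeral j))).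
    nrm. tk3 IH H1 H2.
Qed.

Lemma q1_aux n : provable T (fimp (feq (tplus v2 v0) (numeral n)) (ors (eqs v0 0 (S n)))).
Proof.
  induction n.
  - assert (Hc := case_var T HB 0 ltac:(lia)).
    assert (HA : provable T (fimp (feq v0 tzero) (fimp (feq (tplus v2 v0) (numeral 0)) (ors (eqs v0 0 1))))).
    { nrm. taut. }
    assert (HBc : provable T (fimp (fle v1 v0) (fimp (feq v0 (tsucc v1))
               (fimp (feq (tplus v2 v0) (numeral 0)) (ors (eqs v0 0 1)))))).
    { assert (H1 := E_plus T v2 v2 v0 (tsucc v1)). assert (H2 := E_refl T v2).
      assert (H3 := B4i T HB v2 v1).
      assert (H4 := E_tri (tplus v2 v0) (tplus v2 (tsucc v1)) (numeral 0) (tsucc (tplus v2 v1))).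
      assert (H5 := E_sym T (tplus v2 v0) (numeral 0)).
      assert (H6 := B1i T HB (tplus v2 v1)).
      assert (H7 := E_sym T tzero (tsucc (tplus v2 v1))).
      nrm. eapply mp4; [exact H1|exact H2|exact H3|exact H4|]. tk3 H5 H6 H7. }
    apply (bex_elim T 1) in HBc; [|reflexivity].
    unfold caseF in Hc. nrm. tk3 Hc HA HBc.
  - assert (Hc := case_var T HB 0 ltac:(lia)).
    assert (HA : provable T (fimp (feq v0 tzero) (fimp (feq (tplus v2 v0) (numeral (S n))) (ors (eqs v0 0 (S (S n))))))).
    { nrm. taut. }
    assert (IH := qf_inst' T 0 v1 _ IHn ltac:(simpl; apply qf_ors_eqs)).
    cbn [subst] in IH. unfold v0 in IH. rewrite subst_ors_eqs in IH.
    cbn [subst subst_term Nat.eqb v2 v0] in IH. rewrite (subst_term_notocc 0 v1 (numeral n)) in IH by apply closed_numeral.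
    assert (HBc : provable T (fimp (fle v1 v0) (fimp (feq v0 (tsucc v1))
               (fimp (feq (tplus v2 v0) (numeral (S n))) (ors (eqs v0 0 (S (S n)))))))).
    { assert (H1 := E_plus T v2 v2 v0 (tsucc v1)). assert (H2 := E_refl T v2).
      assert (H3 := B4i T HB v2 v1).
      assert (H4 := E_tri (tplus v2 v0) (tplus v2 (tsucc v1)) (numeral (S n)) (tsucc (tplus v2 v1))).
      assert (H5 := E_sym T (tplus v2 v0) (numeral (S n))).
      assert (H6 := B2i T HB (tplus v2 v1) (numeral n)).
      assert (H7 := E_sym T (numeral (S n)) (tsucc (tplus v2 v1))).
      assert (H8 := shift 0 (S n)).
      nrm. eapply mp4; [exact H1|exact H2|exact H3|exact H4|].
      eapply mp4; [exact H5|exact H6|exact H7|exact H8|]. tk1 IH. }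
    apply (bex_elim T 1) in HBc; [|cbn [free_in occurs_term Nat.eqb orb]; rewrite !closed_numeral, free_ors_eqs by reflexivity; reflexivity].
    unfold caseF in Hc. nrm. tk3 Hc HA HBc.
Qed.


Lemma free_num_atoms y n : free_in y (feq (tvar 0) (numeral n)) = Nat.eqb 0 y.
Proof. simpl. rewrite closed_numeral, orb_false_r. auto. Qed.

Lemma q1 n : provable T (fimp (fle v0 (numeral n)) (ors (eqs v0 0 (S n)))).
Proof.
  assert (H1 := B7i T HB v0 (numeral n) eq_refl (closed_numeral _ _) eq_refl).
  assert (H2 := q1_aux n).
  apply (ex_elim T 2) in H2; [|apply free_ors_eqs; reflexivity].
  tk2 H1 H2.
Qed.

Lemma q1_var x n : provable T (fimp (fle (tvar x) (numeral n)) (ors (eqs (tvar x) 0 (S n)))).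
Proof.
  assert (H := qf_inst' T 0 (tvar x) _ (q1 n) ltac:(simpl; apply qf_ors_eqs)).
  cbn [subst] in H. unfold v0 in H. rewrite subst_ors_eqs in H.
  cbn [subst_term Nat.eqb] in H. rewrite (subst_term_notocc 0 _ (numeral n)) in H by apply closed_numeral.
  exact H.
Qed.

Lemma zero_le : provable T (fle tzero v0).
Proof.
  assert (H1 := B7i T HB tzero v0 eq_refl eq_refl eq_refl).
  assert (H2 := ex_intro_t T 2 v0 (feq (tplus v2 tzero) v0) eq_refl).
  cbn [subst subst_term Nat.eqb v2 v0] in H2.
  assert (H3 := B3i T HB v0). nrm. tk3 H1 H2 H3.
Qed.

Lemma eq_le_num i M : i <= M -> provable T (fimp (feq v0 (numeral i)) (fle v0 (numeral M))).
Proof.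
  intros H. assert (H1 := le_num T HB i M H).
  assert (H2 := E_le T (numeral i) v0 (numeral M) (numeral M)).
  assert (H3 := E_sym T v0 (numeral i)). assert (H4 := E_refl T (numeral M)).
  tk4 H1 H2 H3 H4.
Qed.

Lemma ors_le j k M : j + k <= S M -> provable T (fimp (ors (eqs v0 j k)) (fle v0 (numeral M))).
Proof.
  revert j; induction k; intros j Hj.
  - assert (H := E_refl T tzero). nrm. unfold fbot. tk1 H.
  - assert (H1 := IHk (S j) ltac:(lia)). assert (H2 := eq_le_num j M ltac:(lia)).
    unfold eqs in *. cbn [ors map seq] in *. tk2 H1 H2.
Qed.

Lemma q2 m : provable T (fdisj (fle v0 (numeral m)) (fle (numeral m) v0)).
Proof.
  induction m.
  - assert (H := zero_le). nrm. tk1 H.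
  - assert (Ha : provable T (fimp (fle v0 (numeral m)) (fle v0 (numeral (S m))))).
    { assert (H1 := q1 m). assert (H2 := ors_le 0 (S m) (S m) ltac:(lia)). exact (chain T _ _ _ H1 H2). }
    set (D := fdisj (fle v0 (numeral (S m))) (fle (numeral (S m)) v0)).
    assert (Hb : provable T (fimp (feq (tplus v2 (numeral m)) v0) D)).
    { assert (Hc := case_var T HB 2 ltac:(lia)). unfold caseF in Hc.
      assert (P1 := plus_iter T HB v2 m).
      assert (P2 := cong T 2 tzero (iterS m v2)).
      rewrite subst_iterS in P2. unfold v2 in P2. cbn [subst_term Nat.eqb] in P2. rewrite <- numeral_iterS in P2.
      assert (P3 := eq_le_num m (S m) ltac:(lia)).
      assert (P4 := E_tri (tplus v2 (numeral m)) (iterS m v2) v0 (numeral m)).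
      assert (HA : provable T (fimp (feq (tvar 2) tzero) (fimp (feq (tplus v2 (numeral m)) v0) D))).
      { subst D. unfold v2 in *. eapply mp4; [exact P1|exact P2|exact P3|exact P4|taut]. }
      assert (Q2 := cong T 2 (tsucc (tvar 1)) (iterS m v2)).
      rewrite subst_iterS in Q2. cbn [subst_term Nat.eqb] in Q2. unfold v2 in Q2. cbn [subst_term Nat.eqb] in Q2. rewrite iterS_succ in Q2.
      assert (Q3 := plus_iter T HB (tvar 1) (S m)).
      assert (Q4 := E_tri (tplus v2 (numeral m)) (iterS m v2) v0 (iterS (S m) (tvar 1))).
      assert (Q5 := E_tri (iterS (S m) (tvar 1)) v0 (tplus (tvar 1) (numeral (S m))) v0).
      assert (Q6 := E_sym T (tplus (tvar 1) (numeral (S m))) (iterS (S m) (tvar 1))).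
      assert (Q7 := E_sym T v0 (iterS (S m) (tvar 1))).
      assert (Q8 := ex_intro_t T 2 (tvar 1) (feq (tplus v2 (numeral (S m))) v0) eq_refl).
      cbn [subst subst_term Nat.eqb v2 v0] in Q8. rewrite (subst_term_notocc 2 _ (numeral (S m))) in Q8 by apply closed_numeral.
      assert (Q9 := B7i T HB (numeral (S m)) v0 (closed_numeral _ _) eq_refl (closed_numeral _ _)).
      assert (Q10 := E_refl T v0).
      assert (HBc : provable T (fimp (fle (tvar 1) (tvar 2)) (fimp (feq (tvar 2) (tsucc (tvar 1)))
                  (fimp (feq (tplus v2 (numeral m)) v0) D)))).
      { subst D. unfold v0, v2 in *.
        eapply mp4; [exact P1|exact Q2|exact Q3|exact Q4|].
        eapply mp4; [exact Q5|exact Q6|exact Q7|exact Q8|].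
        eapply mp2; [exact Q9| exact Q10| taut]. }
      apply (bex_elim T 1) in HBc.
      2: { subst D. cbn [free_in occurs_term Nat.eqb orb fdisj]. rewrite !closed_numeral. reflexivity. }
      tk3 Hc HA HBc. }
    apply (ex_elim T 2) in Hb.
    2: { subst D. cbn [free_in occurs_term Nat.eqb orb fdisj]. rewrite !closed_numeral. reflexivity. }
    assert (H7 := B7i T HB (numeral m) v0 (closed_numeral _ _) eq_refl (closed_numeral _ _)).
    subst D. tk4 IHm Ha Hb H7.
Qed.

Lemma q2_var x m : provable T (fdisj (fle (tvar x) (numeral m)) (fle (numeral m) (tvar x))).
Proof.
  assert (H := qf_inst' T 0 (tvar x) _ (q2 m) eq_refl).
  cbn [subst subst_term Nat.eqb v0 fdisj] in H. rewrite !(subst_term_notocc 0 _ (numeral m)) in H by apply closed_numeral.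
  exact H.
Qed.

End Q.

End MP4b.
Import MP4b.

Module MP5.

Definition e0 : nat -> nat := fun _ => 0.

Section D0.
Variable T : formula -> Prop.
Hypothesis HB : forall f, IDelta0_axiom f -> provable T f.

Lemma ors_elim x C j k : (forall i, j <= i < j + k -> provable T (fimp (feq (tvar x) (numeral i)) C)) ->
  provable T (fimp (ors (eqs (tvar x) j k)) C).
Proof.
  revert j; induction k; intros j H.
  - assert (H0 := E_refl T tzero). simpl. unfold fbot. tk1 H0.
  - assert (H1 := IHk (S j) ltac:(intros; apply H; lia)). assert (H2 := H j ltac:(lia)).
    unfold eqs in *. cbn [ors map seq] in *. tk2 H1 H2.
Qed.

Lemma sentence_closed_l u v : sentence (feq u v) -> closed_t u /\ closed_t v.
Proof.
  intros H; split; intros i; specialize (H i); simpl in H; apply orb_false_iff in H; tauto.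
Qed.
Lemma sentence_closed_l' u v : sentence (fle u v) -> closed_t u /\ closed_t v.
Proof.
  intros H; split; intros i; specialize (H i); simpl in H; apply orb_false_iff in H; tauto.
Qed.

Lemma d0c_n n : forall g, fsize g <= n -> delta0 g -> sentence g ->
  (sat e0 g -> provable T g) /\ (~ sat e0 g -> provable T (fneg g)).
Proof.
  induction n; intros g Hs Hd Hsent.
  { inversion Hd; subst; simpl in Hs; lia. }
  inversion Hd; subst.
  - destruct (sentence_closed_l _ _ Hsent) as [Hu Hv].
    assert (H1 := eval_num T HB u Hu). assert (H2 := eval_num T HB v Hv).
    simpl. unfold e0. split; intros Hsat.
    + rewrite Hsat in H1. assert (H3 := E_sym T v (numeral (eval (fun _ => 0) v))).
      assert (H4 := E_trans T u (numeral (eval (fun _ => 0) v)) v). tk4 H1 H2 H3 H4.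
    + assert (H3 := num_neq T HB _ _ Hsat).
      assert (H4 := E_tri T u v (numeral (eval (fun _ => 0) u)) (numeral (eval (fun _ => 0) v))).
      tk4 H1 H2 H3 H4.
  - destruct (sentence_closed_l' _ _ Hsent) as [Hu Hv].
    assert (H1 := eval_num T HB u Hu). assert (H2 := eval_num T HB v Hv).
    simpl. unfold e0. split; intros Hsat.
    + assert (H3 := le_num T HB _ _ Hsat).
      assert (H4 := E_le T (numeral (eval (fun _ => 0) u)) u (numeral (eval (fun _ => 0) v)) v).
      assert (H5 := E_sym T u (numeral (eval (fun _ => 0) u))).
      assert (H6 := E_sym T v (numeral (eval (fun _ => 0) v))).
      eapply mp4; [exact H1|exact H2|exact H3|exact H4|]. tk2 H5 H6.
    + assert (H3 := nle_num T HB (eval (fun _ => 0) u) (eval (fun _ => 0) v) ltac:(lia)).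
      assert (H4 := E_le T u (numeral (eval (fun _ => 0) u)) v (numeral (eval (fun _ => 0) v))).
      tk4 H1 H2 H3 H4.
  - simpl in Hs. assert (Hs' : fsize g0 <= n) by lia.
    assert (Hse : sentence g0) by (intro i; apply (Hsent i)).
    destruct (IHn g0 Hs' H Hse) as [Ht Hf]. simpl. split; intros Hsat.
    + apply Hf; auto.
    + apply NNPP in Hsat. assert (H1 := Ht Hsat). tk1 H1.
  - simpl in Hs. assert (Hs1 : fsize g0 <= n) by lia. assert (Hs2 : fsize h <= n) by lia.
    assert (Hse1 : sentence g0) by (intro i; specialize (Hsent i); simpl in Hsent; apply orb_false_iff in Hsent; tauto).
    assert (Hse2 : sentence h) by (intro i; specialize (Hsent i); simpl in Hsent; apply orb_false_iff in Hsent; tauto).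
    destruct (IHn g0 Hs1 H Hse1) as [Ht1 Hf1]. destruct (IHn h Hs2 H0 Hse2) as [Ht2 Hf2].
    simpl. split; intros Hsat.
    + destruct (classic (sat e0 g0)) as [Hg|Hg].
      * assert (K := Ht2 (Hsat Hg)). tk1 K.
      * assert (K := Hf1 Hg). tk1 K.
    + assert (Hg : sat e0 g0) by (apply NNPP; intro Hn; apply Hsat; intro; contradiction).
      assert (Hh : ~ sat e0 h) by (intro Hh; apply Hsat; auto).
      assert (K1 := Ht1 Hg). assert (K2 := Hf2 Hh). tk2 K1 K2.
  -
    rename x into x0. rename t into t0. rename g0 into h.
    simpl in Hs.
    assert (Hct : closed_t t0).
    { intro i. destruct (occurs_term i t0) eqn:E; auto.
      destruct (Nat.eqb x0 i) eqn:E2.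
      - apply Nat.eqb_eq in E2; subst; congruence.
      - specialize (Hsent i). simpl in Hsent. rewrite E2, E in Hsent. simpl in Hsent.
        discriminate. }
    assert (Hfh : forall y, free_in y h = true -> y = x0).
    { intros y Hy. destruct (Nat.eqb x0 y) eqn:E2.
      - apply Nat.eqb_eq in E2; auto.
      - specialize (Hsent y). simpl in Hsent. rewrite E2, Hy in Hsent. rewrite !orb_true_r in Hsent. discriminate. }
    set (N := eval e0 t0).
    assert (HtN := eval_num T HB t0 Hct). fold e0 in HtN. fold N in HtN.
    assert (Hsub : forall a, fsize (subst x0 (numeral a) h) <= n /\ delta0 (subst x0 (numeral a) h) /\
                   sentence (subst x0 (numeral a) h)).
    { intros a. rewrite fsize_subst. split; [lia|]. split.
      - apply delta0_subst; auto. apply closed_numeral.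
      - apply sentence_subst; auto. apply closed_numeral. }
    assert (Hsem : sat e0 (fall x0 (fimp (fle (tvar x0) t0) h)) <->
                   forall a, a <= N -> sat e0 (subst x0 (numeral a) h)).
    { simpl. split; intros H1 a; specialize (H1 a);
        rewrite sat_subst_closed in * by apply closed_numeral; rewrite eval_numeral in *;
        rewrite update_eq, (eval_closed _ e0 t0 Hct) in *; auto. }
    split; intros Hsat.
    + rewrite Hsem in Hsat. apply PGen.
      assert (L1 := E_le T (tvar x0) (tvar x0) t0 (numeral N)).
      assert (L1' := E_refl T (tvar x0)).
      assert (L2 := q1_var T HB x0 N).
      assert (L3 : provable T (fimp (ors (eqs (tvar x0) 0 (S N))) h)).
      { apply ors_elim. intros i Hi.
        destruct (Hsub i) as [A1 [A2 A3]].
        assert (K1 := proj1 (IHn _ A1 A2 A3) (Hsat i ltac:(lia))).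
        assert (K2 := leibniz T x0 (numeral i) h (closed_numeral i)). tk2 K1 K2. }
      eapply mp3; [exact L1'|exact HtN|exact L1|]. tk2 L2 L3.
    + rewrite Hsem in Hsat. apply not_all_ex_not in Hsat. destruct Hsat as [a Ha].
      apply imply_to_and in Ha. destruct Ha as [Ha1 Ha2].
      destruct (Hsub a) as [A1 [A2 A3]].
      assert (K1 := proj2 (IHn _ A1 A2 A3) Ha2).
      assert (K2 := le_num T HB _ _ Ha1).
      assert (K3 := E_le T (numeral a) (numeral a) (numeral N) t0).
      assert (K4 := E_refl T (numeral a)). assert (K5 := E_sym T t0 (numeral N)).
      assert (K6 := PAx T _ (LA4 x0 (numeral a) (fimp (fle (tvar x0) t0) h) (free_for_closed _ _ _ (closed_numeral a)))).
      cbn [subst subst_term] in K6. rewrite Nat.eqb_refl, (subst_term_notocc x0 _ t0 H) in K6.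
      eapply mp4; [exact K1|exact K2|exact K3|exact K4|]. eapply mp3; [exact K5|exact HtN|exact K6|]. taut.
Qed.

Theorem d0_complete g : delta0 g -> sentence g -> sat e0 g -> provable T g.
Proof. intros Hd Hs Hsat. exact (proj1 (d0c_n (fsize g) g (le_n _) Hd Hs) Hsat). Qed.

End D0.

End MP5.
Import MP5.

Module MP6.

Definition beta (a b i : nat) : nat := a mod S (S i * b).

Lemma divide_fact g s : 1 <= g <= s -> Nat.divide g (fact s).
Proof.
  induction s; intros H; [lia|].
  simpl fact. destruct (Nat.eq_dec g (S s)).
  - subst. exists (fact s). simpl. lia.
  - replace (fact s + s * fact s) with (S s * fact s) by (simpl; lia).
    apply Nat.divide_mul_r. apply IHs; lia.
Qed.

Lemma fact_ge s : s <= fact s.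
Proof. induction s; simpl; [lia|]. assert (0 < fact s) by apply lt_O_fact. nia. Qed.

Lemma coprime_mul x y z : Nat.gcd x z = 1 -> Nat.gcd y z = 1 -> Nat.gcd (x * y) z = 1.
Proof.
  intros H1 H2. set (d := Nat.gcd (x * y) z).
  assert (Hdz : Nat.divide d z) by apply Nat.gcd_divide_r.
  assert (Hdxy : Nat.divide d (x * y)) by apply Nat.gcd_divide_l.
  assert (Hdx : Nat.gcd d x = 1).
  { apply Nat.divide_1_r. rewrite <- H1. apply Nat.gcd_greatest.
    - apply Nat.gcd_divide_r.
    - eapply Nat.divide_trans; [apply Nat.gcd_divide_l| exact Hdz]. }
  assert (Hdy : Nat.divide d y) by (eapply Nat.gauss; eauto).
  apply Nat.divide_1_r. rewrite <- H2. apply Nat.gcd_greatest; auto.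
Qed.

Section Beta.
Variable b : nat.
Definition mm (i : nat) : nat := S (S i * b).

Lemma gcd_b_mm i : Nat.gcd (mm i) b = 1.
Proof.
  apply Nat.divide_1_r.
  assert (H1 : Nat.divide (Nat.gcd (mm i) b) (mm i)) by apply Nat.gcd_divide_l.
  assert (H2 : Nat.divide (Nat.gcd (mm i) b) (S i * b)) by (apply Nat.divide_mul_r, Nat.gcd_divide_r).
  replace 1 with (mm i - S i * b) by (unfold mm; lia).
  apply Nat.divide_sub_r; auto.
Qed.

Lemma mm_coprime s i j : b = fact s -> i < j -> j <= s -> Nat.gcd (mm i) (mm j) = 1.
Proof.
  intros Hb Hij Hjs. set (g := Nat.gcd (mm i) (mm j)).
  assert (Hgi : Nat.divide g (mm i)) by apply Nat.gcd_divide_l.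
  assert (Hgj : Nat.divide g (mm j)) by apply Nat.gcd_divide_r.
  assert (Hd : Nat.divide g (b * (j - i))).
  { replace (b * (j - i)) with (mm j - mm i) by (unfold mm; nia). apply Nat.divide_sub_r; auto. }
  assert (Hgb : Nat.gcd g b = 1).
  { apply Nat.divide_1_r. rewrite <- (gcd_b_mm i). apply Nat.gcd_greatest.
    - eapply Nat.divide_trans; [apply Nat.gcd_divide_l| exact Hgi].
    - apply Nat.gcd_divide_r. }
  assert (Hg : Nat.divide g (j - i)) by (eapply Nat.gauss; eauto).
  assert (Hg0 : g <> 0).
  { intro H0. apply Nat.gcd_eq_0 in H0. unfold mm in H0. lia. }
  assert (Hle : g <= j - i) by (apply Nat.divide_pos_le; auto; lia).
  assert (Hgf : Nat.divide g b) by (rewrite Hb; apply divide_fact; lia).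
  rewrite <- Hgb. symmetry. apply Nat.gcd_unique_alt. intros q; split; intros Hq.
  - split; auto. eapply Nat.divide_trans; eauto.
  - apply Hq.
Qed.

Fixpoint prodm (k : nat) : nat := match k with 0 => 1 | S k' => prodm k' * mm k' end.

Lemma prodm_pos k : 0 < prodm k.
Proof. induction k; simpl; [lia|]. unfold mm. nia. Qed.

Lemma prodm_div i k : i < k -> Nat.divide (mm i) (prodm k).
Proof.
  induction k; intros H; [lia|]. simpl. destruct (Nat.eq_dec i k).
  - subst. apply Nat.divide_mul_r, Nat.divide_refl.
  - apply Nat.divide_mul_l. apply IHk; lia.
Qed.

Lemma prodm_coprime s k j : b = fact s -> k <= j -> j <= s -> Nat.gcd (prodm k) (mm j) = 1.
Proof.
  intros Hb Hk Hj. induction k; simpl.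
  - reflexivity.
  - apply coprime_mul. apply IHk; lia. apply (mm_coprime s); auto; lia.
Qed.

Lemma crt (l : nat -> nat) s k : b = fact s -> k <= S s -> (forall i, i < k -> l i < mm i) ->
  exists a, forall i, i < k -> a mod (mm i) = l i.
Proof.
  intros Hb. induction k; intros Hk Hl.
  - exists 0; intros; lia.
  - destruct IHk as [a Ha]; [lia| intros; apply Hl; lia|].
    set (P := prodm k). set (m := mm k).
    assert (HP : 0 < P) by apply prodm_pos.
    destruct (Nat.gcd_bezout_pos P m HP) as [u [v Huv]].
    assert (Hg : Nat.gcd P m = 1) by (apply (prodm_coprime s k k); auto; lia). rewrite Hg in Huv.
    set (c := l k + m * a - a).
    exists (a + u * c * P). intros i Hi.
    destruct (Nat.eq_dec i k).
    + subst i. fold m.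
      assert (Hm : 0 < m) by (unfold m, mm; lia).
      replace (a + u * c * P) with ((a + c) + (c * v) * m) by (rewrite <- Nat.mul_assoc; rewrite (Nat.mul_comm u c);
        rewrite <- Nat.mul_assoc, Huv; nia).
      rewrite Nat.Div0.mod_add.
      replace (a + c) with (l k + a * m) by (unfold c; nia).
      rewrite Nat.Div0.mod_add. apply Nat.mod_small. apply Hl; lia.
    + destruct (prodm_div i k ltac:(lia)) as [q Hq]. fold P in Hq.
      replace (a + u * c * P) with (a + (u * c * q) * mm i) by (rewrite Hq; nia).
      rewrite Nat.Div0.mod_add. apply Ha; lia.
Qed.
End Beta.

Definition maxl (l : list nat) : nat := fold_right Nat.max 0 l.

Lemma nth_le_maxl l i : nth i l 0 <= maxl l.
Proof.
  revert i; induction l; intros i; destruct i; simpl; try lia.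
  specialize (IHl i); lia.
Qed.



Lemma beta_exists (l : list nat) : exists a b, forall i, i < length l -> beta a b i = nth i l 0.
Proof.
  set (s := S (length l + maxl l)).
  assert (Hl : forall i, i < length l -> nth i l 0 < mm (fact s) i).
  { intros i Hi. assert (H1 := nth_le_maxl l i). assert (H2 := fact_ge s). unfold mm. subst s. nia. }
  destruct (crt (fact s) (fun i => nth i l 0) s (length l) eq_refl ltac:(lia) Hl) as [a Ha].
  exists a, (fact s). intros i Hi. apply Ha; auto.
Qed.

End MP6.
Import MP6.

Module MP7.

Definition bex (x : nat) (t : term) (g : formula) : formula :=
  fneg (fall x (fimp (fle (tvar x) t) (fneg g))).
Definition ball (x : nat) (t : term) (g : formula) : formula :=
  fall x (fimp (fle (tvar x) t) g).
Definition flt (a b : term) : formula := fle (tsucc a) b.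
Definition MMt (ti tb : term) : term := tsucc (ttimes (tsucc ti) tb).
Definition Beta (ta tb ti tr : term) : formula :=
  bex 35 ta (fand (feq ta (tplus (ttimes (tvar 35) (MMt ti tb)) tr)) (flt tr (MMt ti tb))).
Definition PAIR (tp ta tb : term) : formula :=
  feq (tplus tp tp) (tplus (tplus (ttimes (tplus ta tb) (tsucc (tplus ta tb))) ta) ta).
Definition two1 (tp : term) : term := tsucc (tplus tp tp).

Lemma sat_fimp e a b : sat e (fimp a b) <-> (sat e a -> sat e b).
Proof. simpl. tauto. Qed.
Lemma sat_fle e a b : sat e (fle a b) <-> eval e a <= eval e b.
Proof. simpl. tauto. Qed.
Lemma sat_feq e a b : sat e (feq a b) <-> eval e a = eval e b.
Proof. simpl. tauto. Qed.

Lemma sat_fand e a b : sat e (fand a b) <-> sat e a /\ sat e b.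
Proof. simpl. tauto. Qed.

Lemma eval_upd_notocc e x a t : occurs_term x t = false -> eval (update e x a) t = eval e t.
Proof.
  intros H; apply eval_ext; intros i Hi. unfold update.
  destruct (Nat.eqb i x) eqn:E; auto. apply Nat.eqb_eq in E; subst; congruence.
Qed.

Lemma sat_bex e x t g : occurs_term x t = false ->
  (sat e (bex x t g) <-> exists a, a <= eval e t /\ sat (update e x a) g).
Proof.
  intros H; unfold bex; simpl. split.
  - intros H1. apply NNPP. intros H2. apply H1. intros a H3 H4. apply H2. exists a.
    rewrite update_eq, eval_upd_notocc in H3; auto.
  - intros [a [H1 H2]] H3. apply (H3 a); auto. rewrite update_eq, eval_upd_notocc; auto.
Qed.

Lemma sat_ball e x t g : occurs_term x t = false ->
  (sat e (ball x t g) <-> forall a, a <= eval e t -> sat (update e x a) g).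
Proof.
  intros H; unfold ball; simpl. split; intros H1 a; specialize (H1 a);
  rewrite update_eq, eval_upd_notocc in *; auto.
Qed.

Lemma sat_Beta e ta tb ti tr :
  occurs_term 35 ta = false -> occurs_term 35 tb = false -> occurs_term 35 ti = false -> occurs_term 35 tr = false ->
  (sat e (Beta ta tb ti tr) <-> eval e tr = beta (eval e ta) (eval e tb) (eval e ti)).
Proof.
  intros H1 H2 H3 H4. unfold Beta. rewrite sat_bex by auto. unfold beta.
  set (a := eval e ta). set (m := S (S (eval e ti) * eval e tb)).
  split.
  - intros [q [Hq Hs]]. rewrite sat_fand in Hs. destruct Hs as [Ha Hr].
    cbn [sat eval MMt flt] in Ha, Hr. rewrite (eval_upd_notocc e 35 q tr H4), (eval_upd_notocc e 35 q ta H1), (eval_upd_notocc e 35 q tb H2), (eval_upd_notocc e 35 q ti H3) in *. rewrite update_eq in Ha.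
    apply (Nat.mod_unique a m q); [unfold m; simpl; lia|]. fold a in Ha. rewrite Ha. unfold m; simpl. lia.
  - intros Hr. exists (a / m). split.
    + apply Nat.Div0.div_le_upper_bound. unfold m. nia.
    + rewrite sat_fand. cbn [sat eval MMt flt]. set (q0 := a / m). rewrite (eval_upd_notocc e 35 q0 tr H4), (eval_upd_notocc e 35 q0 ta H1), (eval_upd_notocc e 35 q0 tb H2), (eval_upd_notocc e 35 q0 ti H3). rewrite update_eq. subst q0.
      fold a. split.
      * rewrite Hr. assert (K := Nat.div_mod a m ltac:(unfold m; lia)). unfold m in *. simpl in *. lia.
      * rewrite Hr. assert (K := Nat.mod_upper_bound a m ltac:(unfold m; lia)). unfold m in *. simpl in *. lia.
Qed.

Lemma even_ss s : exists h, s * S s = 2 * h.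
Proof.
  induction s; [exists 0; lia|]. destruct IHs as [h Hh]. exists (h + S s). nia.
Qed.

Lemma sat_PAIR e tp ta tb : sat e (PAIR tp ta tb) <-> eval e tp = cantor (eval e ta) (eval e tb).
Proof.
  unfold PAIR, cantor; cbn [sat eval]. set (p := eval e tp). set (a := eval e ta). set (b := eval e tb).
  destruct (even_ss (a + b)) as [h Hh].
  replace ((a + b) * (a + b + 1)) with (2 * h) by (rewrite <- Hh; f_equal; lia).
  rewrite (Nat.mul_comm 2 h), Nat.div_mul by lia. lia.
Qed.

Inductive bf : Type :=
| BEq (t u : term) | BLe (t u : term) | BAnd (a b : bf) | BImp (a b : bf)
| BEx (x : nat) (t : term) (g : bf) | BAll (x : nat) (t : term) (g : bf)
| BBeta (ta tb ti tr : term) | BPair (tp ta tb : term).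

Fixpoint toF (g : bf) : formula :=
  match g with
  | BEq t u => feq t u
  | BLe t u => fle t u
  | BAnd a b => fand (toF a) (toF b)
  | BImp a b => fimp (toF a) (toF b)
  | BEx x t g => bex x t (toF g)
  | BAll x t g => ball x t (toF g)
  | BBeta ta tb ti tr => Beta ta tb ti tr
  | BPair tp ta tb => PAIR tp ta tb
  end.

Fixpoint bsem (e : nat -> nat) (g : bf) : Prop :=
  match g with
  | BEq t u => eval e t = eval e u
  | BLe t u => eval e t <= eval e u
  | BAnd a b => bsem e a /\ bsem e b
  | BImp a b => bsem e a -> bsem e b
  | BEx x t g => exists a, a <= eval e t /\ bsem (update e x a) g
  | BAll x t g => forall a, a <= eval e t -> bsem (update e x a) g
  | BBeta ta tb ti tr => eval e tr = beta (eval e ta) (eval e tb) (eval e ti)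
  | BPair tp ta tb => eval e tp = cantor (eval e ta) (eval e tb)
  end.

Fixpoint wfb (g : bf) : bool :=
  match g with
  | BEq _ _ | BLe _ _ | BPair _ _ _ => true
  | BAnd a b | BImp a b => wfb a && wfb b
  | BEx x t g | BAll x t g => negb (occurs_term x t) && wfb g
  | BBeta ta tb ti tr => negb (occurs_term 35 ta || occurs_term 35 tb || occurs_term 35 ti || occurs_term 35 tr)
  end.

Lemma toF_sem g : wfb g = true -> forall e, sat e (toF g) <-> bsem e g.
Proof.
  induction g; cbn [toF bsem wfb]; intros Hw e; try (simpl; tauto).
  - apply andb_true_iff in Hw; destruct Hw. rewrite sat_fand, IHg1, IHg2; auto. tauto.
  - apply andb_true_iff in Hw; destruct Hw. rewrite sat_fimp, IHg1, IHg2; auto. tauto.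
  - apply andb_true_iff in Hw; destruct Hw as [H1 H2]. apply negb_true_iff in H1.
    rewrite sat_bex by auto. split; intros [a [Ha Hs]]; exists a; split; auto; apply IHg; auto.
  - apply andb_true_iff in Hw; destruct Hw as [H1 H2]. apply negb_true_iff in H1.
    rewrite sat_ball by auto. split; intros Hs a Ha; apply IHg; auto.
  - apply negb_true_iff in Hw. rewrite !orb_false_iff in Hw. apply sat_Beta; tauto.
  - apply sat_PAIR.
Qed.

(* the Delta_0 graph of the diagonal function; free variables:
   90 = K, 91 = cS, 92 = c0, iN, iu, iw *)
Definition DELTAT (K cS c0 N u w : term) : bf :=
  let n := tvar 20 in let L := tvar 21 in let a1 := tvar 22 in let b1 := tvar 23 in
  let a2 := tvar 24 in let b2 := tvar 25 in let M := tvar 26 in let i := tvar 27 in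
  let j := tvar 28 in let P := tvar 29 in let P1 := tvar 30 in let P2 := tvar 31 in
  let r1 := tvar 32 in let r2 := tvar 33 in let r3 := tvar 34 in
  let EQN := BEq N (tplus (ttimes (tplus n L) (tplus n L)) L) in
  let FIB0 := BBeta a1 b1 tzero (tsucc tzero) in
  let FIB1 := BBeta a1 b1 (tsucc tzero) (tsucc tzero) in
  let FIBREC := BAll 27 M (BImp (BLe (tsucc (tsucc i)) M)
        (BEx 32 w (BEx 33 w (BEx 34 w
          (BAnd (BBeta a1 b1 i r1) (BAnd (BBeta a1 b1 (tsucc i) r2)
          (BAnd (BBeta a1 b1 (tsucc (tsucc i)) r3) (BEq r3 (tplus r2 r1))))))))) in
  let SUM0 := BBeta a2 b2 tzero tzero in
  let SUMREC := BAll 28 N (BImp (BLe (tsucc j) N) (BEx 29 w (BAnd (BPair P cS (tplus L j)) (BAnd (BLe (two1 P) M)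
          (BEx 32 w (BEx 33 w (BEx 34 w (BAnd (BBeta a2 b2 j r1) (BAnd (BBeta a2 b2 (tsucc j) r2)
          (BAnd (BBeta a1 b1 (two1 P) r3) (BEq r2 (tplus r1 r3)))))))))))) in
  let FINAL := BEx 30 w (BEx 31 w (BAnd (BPair P1 K L) (BAnd (BPair P2 c0 (tplus L N))
    (BAnd (BLe (two1 P1) M) (BAnd (BLe (two1 P2) M)
    (BEx 32 w (BEx 33 w (BEx 34 w (BAnd (BBeta a1 b1 (two1 P1) r1) (BAnd (BBeta a2 b2 N r2)
    (BAnd (BBeta a1 b1 (two1 P2) r3) (BEq (tplus u r1) (tplus (tplus n r2) r3))))))))))))) in
  BAnd (BLe u w) (BEx 20 w (BEx 21 w (BEx 22 w (BEx 23 w (BEx 24 w (BEx 25 w (BEx 26 w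
  (BAnd EQN (BAnd FIB0 (BAnd FIB1 (BAnd FIBREC (BAnd SUM0 (BAnd SUMREC FINAL))))))))))))).

Definition DELTA (iN iu iw : nat) : bf := DELTAT (tvar 90) (tvar 91) (tvar 92) (tvar iN) (tvar iu) (tvar iw).

Definition deltaT K cS c0 N u w : formula := toF (DELTAT K cS c0 N u w).

Definition delta (iN iu iw : nat) : formula := toF (DELTA iN iu iw).

Lemma delta_sem e : sat e (delta 98 99 97) <-> bsem e (DELTA 98 99 97).
Proof. apply toF_sem. vm_compute. reflexivity. Qed.

Lemma delta_sem2 e : sat e (delta 98 95 96) <-> bsem e (DELTA 98 95 96).
Proof. apply toF_sem. vm_compute. reflexivity. Qed.


End MP7.
Import MP7.

Module MP8.

Definition idx (a b : nat) : nat := S (cantor a b + cantor a b).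

Fixpoint Sfun (cS L k : nat) : nat :=
  match k with 0 => 0 | S k' => Sfun cS L k' + fibZ (idx cS (L + k')) end.

Lemma pair_inj n L n' L' : (n + L) * (n + L) + L = (n' + L') * (n' + L') + L' -> n = n' /\ L = L'.
Proof.
  intros H. assert (Hs : n + L = n' + L') by nia. rewrite Hs in H. lia.
Qed.

Lemma cantor_mono a b b' : b <= b' -> cantor a b <= cantor a b'.
Proof.
  intros H. unfold cantor. assert ((a + b) * (a + b + 1) <= (a + b') * (a + b' + 1)) by nia.
  assert (K := Nat.Div0.div_le_mono _ _ 2 H0). lia.
Qed.

Lemma delta_fun e : bsem e (DELTA 98 99 97) ->
  exists n L, e 98 = (n + L) * (n + L) + L /\
    e 99 + fibZ (idx (e 90) L) = n + Sfun (e 91) L (e 98) + fibZ (idx (e 92) (L + e 98)).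
Proof.
  cbn [bsem DELTA DELTAT eval update Nat.eqb two1].
  intros [Hu [n [_ [L [_ [a1 [_ [b1 [_ [a2 [_ [b2 [_ [M [_ [HN [F0 [F1 [FR [S0 [SR FIN]]]]]]]]]]]]]]]]]]]]].
  exists n, L. split; auto.
  assert (Hfib : forall i, i <= M -> beta a1 b1 i = fibZ i /\ (S i <= M -> beta a1 b1 (S i) = fibZ (S i))).
  { induction i; intros Hi.
    - split; auto.
    - destruct (IHi ltac:(lia)) as [_ H2]. split; [apply H2; lia|]. intros Hi2.
      destruct (FR i ltac:(lia) Hi2) as [r1 [_ [r2 [_ [r3 [_ [E1 [E2 [E3 E4]]]]]]]]].
      destruct IHi as [H3 _]; [lia|].
      rewrite <- E3, E4, E1, E2, H3, H2 by lia. simpl. lia. }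
  assert (Hsum : forall j, j <= e 98 -> beta a2 b2 j = Sfun (e 91) L j).
  { induction j; intros Hj; auto.
    destruct (SR j ltac:(lia) Hj) as [P [_ [EP [HP [r1 [_ [r2 [_ [r3 [_ [E1 [E2 [E3 E4]]]]]]]]]]]]].
    simpl. rewrite <- E2, E4, E1, E3, IHj by lia. rewrite (proj1 (Hfib _ HP)). unfold idx. rewrite <- EP. auto. }
  destruct FIN as [P1 [_ [P2 [_ [EP1 [EP2 [HP1 [HP2 [r1 [_ [r2 [_ [r3 [_ [E1 [E2 [E3 E4]]]]]]]]]]]]]]]]].
  rewrite E1, E2, E3, (proj1 (Hfib _ HP1)), (proj1 (Hfib _ HP2)), Hsum in E4 by lia.
  unfold idx. rewrite <- EP1, <- EP2. lia.
Qed.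

Lemma delta_fun2 e : bsem e (DELTA 98 95 96) ->
  exists n L, e 98 = (n + L) * (n + L) + L /\
    e 95 + fibZ (idx (e 90) L) = n + Sfun (e 91) L (e 98) + fibZ (idx (e 92) (L + e 98)).
Proof.
  cbn [bsem DELTA DELTAT eval update Nat.eqb two1].
  intros [Hu [n [_ [L [_ [a1 [_ [b1 [_ [a2 [_ [b2 [_ [M [_ [HN [F0 [F1 [FR [S0 [SR FIN]]]]]]]]]]]]]]]]]]]]].
  exists n, L. split; auto.
  assert (Hfib : forall i, i <= M -> beta a1 b1 i = fibZ i /\ (S i <= M -> beta a1 b1 (S i) = fibZ (S i))).
  { induction i; intros Hi.
    - split; auto.
    - destruct (IHi ltac:(lia)) as [_ H2]. split; [apply H2; lia|]. intros Hi2.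
      destruct (FR i ltac:(lia) Hi2) as [r1 [_ [r2 [_ [r3 [_ [E1 [E2 [E3 E4]]]]]]]]].
      destruct IHi as [H3 _]; [lia|].
      rewrite <- E3, E4, E1, E2, H3, H2 by lia. simpl. lia. }
  assert (Hsum : forall j, j <= e 98 -> beta a2 b2 j = Sfun (e 91) L j).
  { induction j; intros Hj; auto.
    destruct (SR j ltac:(lia) Hj) as [P [_ [EP [HP [r1 [_ [r2 [_ [r3 [_ [E1 [E2 [E3 E4]]]]]]]]]]]]].
    simpl. rewrite <- E2, E4, E1, E3, IHj by lia. rewrite (proj1 (Hfib _ HP)). unfold idx. rewrite <- EP. auto. }
  destruct FIN as [P1 [_ [P2 [_ [EP1 [EP2 [HP1 [HP2 [r1 [_ [r2 [_ [r3 [_ [E1 [E2 [E3 E4]]]]]]]]]]]]]]]]].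
  rewrite E1, E2, E3, (proj1 (Hfib _ HP1)), (proj1 (Hfib _ HP2)), Hsum in E4 by lia.
  unfold idx. rewrite <- EP1, <- EP2. lia.
Qed.

Lemma delta_ex K cS c0 n L u : 
  u + fibZ (idx K L) = n + Sfun cS L ((n + L) * (n + L) + L) + fibZ (idx c0 (L + ((n + L) * (n + L) + L))) ->
  exists w, forall e, e 90 = K -> e 91 = cS -> e 92 = c0 -> e 98 = (n + L) * (n + L) + L -> e 99 = u -> e 97 = w ->
    bsem e (DELTA 98 99 97).
Proof.
  intros Heq. set (N := (n + L) * (n + L) + L) in *.
  set (M := idx K L + idx c0 (L + N) + idx cS (L + N)).
  destruct (beta_exists (map fibZ (seq 0 (S M)))) as [a1 [b1 Hb1]].
  destruct (beta_exists (map (Sfun cS L) (seq 0 (S N)))) as [a2 [b2 Hb2]].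
  assert (Hf : forall i, i <= M -> beta a1 b1 i = fibZ i).
  { intros i Hi. rewrite Hb1 by (rewrite length_map, length_seq; lia).
    rewrite nth_indep with (d' := fibZ 0) by (rewrite length_map, length_seq; lia).
    rewrite map_nth, seq_nth by lia. auto. }
  assert (Hs : forall j, j <= N -> beta a2 b2 j = Sfun cS L j).
  { intros j Hj. rewrite Hb2 by (rewrite length_map, length_seq; lia).
    rewrite nth_indep with (d' := Sfun cS L 0) by (rewrite length_map, length_seq; lia).
    rewrite map_nth, seq_nth by lia. auto. }
  assert (Hba1 : forall i, beta a1 b1 i <= a1) by (intros; apply Nat.Div0.mod_le).
  assert (Hba2 : forall i, beta a2 b2 i <= a2) by (intros; apply Nat.Div0.mod_le).
  set (w := u + n + L + a1 + b1 + a2 + b2 + M + N).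
  exists w. intros e E90 E91 E92 E98 E99 E97.
  cbn [bsem DELTA DELTAT eval update Nat.eqb two1].
  rewrite E90, E91, E92, E98, E99, E97.
  split; [unfold w; lia|].
  exists n; split; [unfold w; lia|]. exists L; split; [unfold w; lia|].
  exists a1; split; [unfold w; lia|]. exists b1; split; [unfold w; lia|].
  exists a2; split; [unfold w; lia|]. exists b2; split; [unfold w; lia|].
  exists M; split; [unfold w; lia|].
  split; [auto|].
  split; [rewrite Hf by (unfold M, idx; lia); auto|].
  split; [rewrite Hf by (unfold M, idx; lia); auto|].
  split.
  { intros i Hi Hi2. exists (beta a1 b1 i); split; [specialize (Hba1 i); unfold w; lia|].
    exists (beta a1 b1 (S i)); split; [specialize (Hba1 (S i)); unfold w; lia|].
    exists (beta a1 b1 (S (S i))); split; [specialize (Hba1 (S (S i))); unfold w; lia|].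
    split; auto. split; auto. split; auto. rewrite !Hf by lia. simpl. lia. }
  split; [rewrite Hs by lia; auto|].
  split.
  { intros j Hj Hj2. assert (Hc : cantor cS (L + j) <= cantor cS (L + N)) by (apply cantor_mono; lia).
    exists (cantor cS (L + j)). split; [unfold w, M, idx in *; lia|]. split; auto.
    split; [unfold M, idx in *; lia|].
    exists (beta a2 b2 j); split; [specialize (Hba2 j); unfold w; lia|].
    exists (beta a2 b2 (S j)); split; [specialize (Hba2 (S j)); unfold w; lia|].
    exists (beta a1 b1 (S (cantor cS (L + j) + cantor cS (L + j)))); split;
      [specialize (Hba1 (S (cantor cS (L + j) + cantor cS (L + j)))); unfold w; lia|].
    split; auto. split; auto. split; auto.
    rewrite !Hs by lia. rewrite Hf by (unfold M, idx in *; lia). simpl. unfold idx. lia. }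
  exists (cantor K L). split; [unfold w, M, idx; lia|].
  exists (cantor c0 (L + N)). split; [unfold w, M, idx; lia|].
  split; auto. split; auto. split; [unfold M, idx; lia|]. split; [unfold M, idx; lia|].
  exists (beta a1 b1 (S (cantor K L + cantor K L))); split; [specialize (Hba1 (S (cantor K L + cantor K L))); unfold w; lia|].
  exists (beta a2 b2 N); split; [specialize (Hba2 N); unfold w; lia|].
  exists (beta a1 b1 (S (cantor c0 (L + N) + cantor c0 (L + N)))); split;
    [specialize (Hba1 (S (cantor c0 (L + N) + cantor c0 (L + N)))); unfold w; lia|].
  split; auto. split; auto. split; auto.
  rewrite !Hf by (unfold M, idx; lia). rewrite Hs by lia. unfold idx in Heq. lia.
Qed.

End MP8.
Import MP8.

Module MP9.

Ltac eqb_simpl :=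
  repeat match goal with
  | |- context [Nat.eqb ?a ?a] => rewrite (Nat.eqb_refl a)
  | |- context [Nat.eqb ?a ?b] => rewrite (proj2 (Nat.eqb_neq a b)) by lia
  end.

Lemma deltaT_subst v r a b c d e f : 36 <= v ->
  subst v r (deltaT a b c d e f) =
  deltaT (subst_term v r a) (subst_term v r b) (subst_term v r c) (subst_term v r d) (subst_term v r e) (subst_term v r f).
Proof.
  intros Hv. unfold deltaT, DELTAT.
  cbn [toF subst subst_term bex ball fand Beta PAIR MMt two1 flt].
  eqb_simpl. reflexivity.
Qed.

Fixpoint bvs (f : formula) : list nat :=
  match f with
  | feq _ _ | fle _ _ => []
  | fneg g => bvs g
  | fimp g h => bvs g ++ bvs h
  | fall i g => i :: bvs g
  end.

Lemma free_for_var_notbound v a f : ~ In v (bvs f) -> free_for (tvar v) a f = true.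
Proof.
  induction f; simpl; intros H; auto.
  - rewrite IHf1, IHf2; auto; intro; apply H; apply in_or_app; auto.
  - destruct (negb _); auto. rewrite IHf by tauto.
    replace (Nat.eqb v n) with false; auto. symmetry; apply Nat.eqb_neq; intro; subst; tauto.
Qed.

Lemma bvs_subst x t f : bvs (subst x t f) = bvs f.
Proof. induction f; simpl; auto. rewrite IHf1, IHf2; auto. destruct (Nat.eqb n x); simpl; auto. rewrite IHf; auto. Qed.

Fixpoint isd0 (f : formula) : bool :=
  match f with
  | feq _ _ | fle _ _ => true
  | fneg g => isd0 g
  | fimp g h => isd0 g && isd0 h
  | fall x (fimp (fle (tvar y) t) g) => Nat.eqb x y && negb (occurs_term x t) && isd0 g
  | fall _ _ => false
  end.

Lemma isd0_ok_n n : forall f, fsize f <= n -> isd0 f = true -> delta0 f.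
Proof.
  induction n; intros f Hs H; [destruct f; simpl in Hs; lia|].
  destruct f; simpl in Hs, H.
  - constructor.
  - constructor.
  - constructor; apply IHn; auto; lia.
  - apply andb_true_iff in H; destruct H; constructor; apply IHn; auto; lia.
  - destruct f; try discriminate. destruct f1; try discriminate. destruct t; try discriminate.
    apply andb_true_iff in H; destruct H as [H H3]. apply andb_true_iff in H; destruct H as [H1 H2].
    apply Nat.eqb_eq in H1; subst. apply negb_true_iff in H2.
    apply D0ball; auto. apply IHn; auto. simpl in Hs. lia.
Qed.

Lemma isd0_ok f : isd0 f = true -> delta0 f.
Proof. apply (isd0_ok_n (fsize f)); auto. Qed.

Definition avoid (lo hi : nat) (t : term) : Prop := forall k, lo <= k <= hi -> occurs_term k t = false.

Definition Tm : formula := deltaT (tvar 40) (tvar 41) (tvar 42) (tvar 43) (tvar 44) (tvar 45).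

Lemma deltaT_chain p1 p2 p3 p4 p5 p6 :
  avoid 40 45 p1 -> avoid 40 45 p2 -> avoid 40 45 p3 -> avoid 40 45 p4 -> avoid 40 45 p5 -> avoid 40 45 p6 ->
  deltaT p1 p2 p3 p4 p5 p6 = subst 40 p1 (subst 41 p2 (subst 42 p3 (subst 43 p4 (subst 44 p5 (subst 45 p6 Tm))))).
Proof.
  intros H1 H2 H3 H4 H5 H6. unfold Tm. rewrite !deltaT_subst by lia. cbn [subst_term Nat.eqb].
  rewrite (subst_term_notocc 44 p5 p6) by (apply H6; lia).
  rewrite (subst_term_notocc 43 p4 p6), (subst_term_notocc 43 p4 p5) by (first [apply H6|apply H5]; lia).
  rewrite (subst_term_notocc 42 p3 p6), (subst_term_notocc 42 p3 p5), (subst_term_notocc 42 p3 p4)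
    by (first [apply H6|apply H5|apply H4]; lia).
  rewrite (subst_term_notocc 41 p2 p6), (subst_term_notocc 41 p2 p5), (subst_term_notocc 41 p2 p4),
    (subst_term_notocc 41 p2 p3) by (first [apply H6|apply H5|apply H4|apply H3]; lia).
  rewrite (subst_term_notocc 40 p1 p6), (subst_term_notocc 40 p1 p5), (subst_term_notocc 40 p1 p4),
    (subst_term_notocc 40 p1 p3), (subst_term_notocc 40 p1 p2) by (first [apply H6|apply H5|apply H4|apply H3|apply H2]; lia).
  reflexivity.
Qed.

Lemma Tm_fvs : fvs Tm = [40; 41; 42; 43; 44; 45] \/ incl (fvs Tm) [40; 41; 42; 43; 44; 45].
Proof. right. vm_compute. intros a Ha. simpl in Ha. intuition. Qed.

Lemma deltaT_free v p1 p2 p3 p4 p5 p6 :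
  avoid 40 45 p1 -> avoid 40 45 p2 -> avoid 40 45 p3 -> avoid 40 45 p4 -> avoid 40 45 p5 -> avoid 40 45 p6 ->
  free_in v (deltaT p1 p2 p3 p4 p5 p6) = true ->
  occurs_term v p1 = true \/ occurs_term v p2 = true \/ occurs_term v p3 = true \/
  occurs_term v p4 = true \/ occurs_term v p5 = true \/ occurs_term v p6 = true.
Proof.
  intros H1 H2 H3 H4 H5 H6 H. rewrite deltaT_chain in H by auto.
  destruct (free_in_subst _ _ _ _ H) as [[Ha Na]|Ha]; [|tauto].
  destruct (free_in_subst _ _ _ _ Ha) as [[Hb Nb]|Hb]; [|tauto].
  destruct (free_in_subst _ _ _ _ Hb) as [[Hc Nc]|Hc]; [|tauto].
  destruct (free_in_subst _ _ _ _ Hc) as [[Hd Nd]|Hd]; [|tauto].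
  destruct (free_in_subst _ _ _ _ Hd) as [[He Ne]|He]; [|tauto].
  destruct (free_in_subst _ _ _ _ He) as [[Hf Nf]|Hf]; [|tauto].
  apply free_in_fvs in Hf. destruct Tm_fvs as [E|E]; [rewrite E in Hf| apply E in Hf];
  simpl in Hf; intuition.
Qed.

End MP9.
Import MP9.

Module MP10.

Ltac eqb_simpl :=
  repeat match goal with
  | |- context [Nat.eqb ?a ?a] => rewrite (Nat.eqb_refl a)
  | |- context [Nat.eqb ?a ?b] => rewrite (proj2 (Nat.eqb_neq a b)) by lia
  end.

Lemma avoid_num lo hi n : avoid lo hi (numeral n).
Proof. intros k _; apply closed_numeral. Qed.

Lemma avoid_var lo hi v : (v < lo \/ hi < v) -> avoid lo hi (tvar v).
Proof. intros H k Hk; simpl; apply Nat.eqb_neq; lia. Qed.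

Section Rep.
Variables K cS c0 : nat.

Definition dT (a b c : term) : formula := deltaT (numeral K) (numeral cS) (numeral c0) a b c.
Definition CL (a b c : term) : formula :=
  fall 96 (fimp (fle (tvar 96) c) (fall 95 (fimp (fle (tvar 95) (tvar 96))
    (fimp (dT a (tvar 95) (tvar 96)) (feq (tvar 95) b))))).
Definition Dform (a b : term) : formula := fex 97 (fand (dT a b (tvar 97)) (CL a b (tvar 97))).

Lemma dT_subst v r a b c : 36 <= v -> subst v r (dT a b c) = dT (subst_term v r a) (subst_term v r b) (subst_term v r c).
Proof.
  intros Hv. unfold dT. rewrite deltaT_subst by auto. rewrite !(subst_term_notocc v r (numeral _)) by apply closed_numeral.
  reflexivity.
Qed.

Lemma CL_subst v r a b c : 36 <= v -> v <> 95 -> v <> 96 ->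
  subst v r (CL a b c) = CL (subst_term v r a) (subst_term v r b) (subst_term v r c).
Proof.
  intros H1 H2 H3. unfold CL. cbn [subst subst_term]. eqb_simpl. rewrite dT_subst by auto.
  cbn [subst_term]. eqb_simpl. reflexivity.
Qed.

Lemma Dform_subst v r a b : 36 <= v -> v <> 95 -> v <> 96 -> v <> 97 ->
  subst v r (Dform a b) = Dform (subst_term v r a) (subst_term v r b).
Proof.
  intros H1 H2 H3 H4. unfold Dform, fex, fand. cbn [subst subst_term]. eqb_simpl.
  rewrite dT_subst, CL_subst by auto. cbn [subst_term]. eqb_simpl. reflexivity.
Qed.

Lemma dT_free v a b c : avoid 40 45 a -> avoid 40 45 b -> avoid 40 45 c ->
  free_in v (dT a b c) = true -> occurs_term v a = true \/ occurs_term v b = true \/ occurs_term v c = true.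
Proof.
  intros Ha Hb Hc H. unfold dT in H. apply deltaT_free in H; try apply avoid_num; auto.
  rewrite !closed_numeral in H. intuition discriminate.
Qed.

Opaque dT.
Lemma CL_free v a b c : avoid 40 45 a -> avoid 40 45 b ->
  free_in v (CL a b c) = true -> occurs_term v a = true \/ occurs_term v b = true \/ occurs_term v c = true.
Proof.
  intros Ha Hb H. unfold CL in H. cbn [free_in occurs_term] in H.
  destruct (Nat.eqb 96 v) eqn:E1; [discriminate|].
  apply orb_true_iff in H; destruct H as [H|H].
  - apply orb_true_iff in H; destruct H as [H|H]; [congruence|auto].
  - destruct (Nat.eqb 95 v) eqn:E2; [discriminate|].
    rewrite !orb_true_iff in H. destruct H as [[H|H]|[H|[H|H]]]; try (cbn [occurs_term] in H; congruence); auto.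
    apply dT_free in H; auto; try (apply avoid_var; lia).
    cbn [occurs_term] in H. rewrite E1, E2 in H. intuition discriminate.
Qed.

Lemma Dform_free v a b : avoid 40 45 a -> avoid 40 45 b ->
  free_in v (Dform a b) = true -> occurs_term v a = true \/ occurs_term v b = true.
Proof.
  intros Ha Hb H. unfold Dform, fex, fand in H. cbn [free_in] in H.
  destruct (Nat.eqb 97 v) eqn:E; [discriminate|].
  apply orb_true_iff in H; destruct H as [H|H].
  - apply dT_free in H; auto; [|apply avoid_var; lia]. cbn [occurs_term] in H. rewrite E in H. intuition discriminate.
  - apply CL_free in H; auto. cbn [occurs_term] in H. rewrite E in H. intuition discriminate.
Qed.

Transparent dT.
End Rep.

End MP10.
Import MP10.

Module MP11.

Ltac eqb_simpl :=
  repeat match goal with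
  | |- context [Nat.eqb ?a ?a] => rewrite (Nat.eqb_refl a)
  | |- context [Nat.eqb ?a ?b] => rewrite (proj2 (Nat.eqb_neq a b)) by lia
  end.

Ltac numclosed :=
  repeat match goal with
  | |- context [subst_term ?v ?r (numeral ?n)] => rewrite (subst_term_notocc v r (numeral n)) by apply closed_numeral
  end.

Section Sem.
Variables K cS c0 : nat.

Lemma dT_chain N u w : dT K cS c0 (numeral N) (numeral u) (numeral w) =
  subst 90 (numeral K) (subst 91 (numeral cS) (subst 92 (numeral c0) (subst 98 (numeral N)
    (subst 99 (numeral u) (subst 97 (numeral w) (delta 98 99 97)))))).
Proof.
  change (delta 98 99 97) with (deltaT (tvar 90) (tvar 91) (tvar 92) (tvar 98) (tvar 99) (tvar 97)).
  rewrite !deltaT_subst by lia. cbn [subst_term Nat.eqb]. numclosed. reflexivity.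
Qed.

Lemma dT_chain2 N : dT K cS c0 (numeral N) (tvar 95) (tvar 96) =
  subst 90 (numeral K) (subst 91 (numeral cS) (subst 92 (numeral c0) (subst 98 (numeral N) (delta 98 95 96)))).
Proof.
  change (delta 98 95 96) with (deltaT (tvar 90) (tvar 91) (tvar 92) (tvar 98) (tvar 95) (tvar 96)).
  rewrite !deltaT_subst by lia. cbn [subst_term Nat.eqb]. numclosed. reflexivity.
Qed.

Lemma sat_dT e N u w : sat e (dT K cS c0 (numeral N) (numeral u) (numeral w)) <->
  bsem (update (update (update (update (update (update e 90 K) 91 cS) 92 c0) 98 N) 99 u) 97 w) (DELTA 98 99 97).
Proof.
  rewrite dT_chain. rewrite !sat_subst_closed by apply closed_numeral. rewrite !eval_numeral.
  apply delta_sem.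
Qed.

Lemma sat_dT2 e N : sat e (dT K cS c0 (numeral N) (tvar 95) (tvar 96)) <->
  bsem (update (update (update (update e 90 K) 91 cS) 92 c0) 98 N) (DELTA 98 95 96).
Proof.
  rewrite dT_chain2. rewrite !sat_subst_closed by apply closed_numeral. rewrite !eval_numeral.
  apply delta_sem2.
Qed.

Lemma dT_fun e N u w : sat e (dT K cS c0 (numeral N) (numeral u) (numeral w)) ->
  u <= w /\ exists n L, N = (n + L) * (n + L) + L /\
    u + fibZ (idx K L) = n + Sfun cS L N + fibZ (idx c0 (L + N)).
Proof.
  rewrite sat_dT. intros H. split.
  - cbn [bsem DELTA DELTAT eval update Nat.eqb] in H. tauto.
  - apply delta_fun in H. cbn [update Nat.eqb] in H. exact H.
Qed.

Lemma dT2_fun e N : sat e (dT K cS c0 (numeral N) (tvar 95) (tvar 96)) ->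
  exists n L, N = (n + L) * (n + L) + L /\
    e 95 + fibZ (idx K L) = n + Sfun cS L N + fibZ (idx c0 (L + N)).
Proof.
  rewrite sat_dT2. intros H. apply delta_fun2 in H. cbn [update Nat.eqb] in H. exact H.
Qed.

Lemma dT_ex e n L u :
  u + fibZ (idx K L) = n + Sfun cS L ((n + L) * (n + L) + L) + fibZ (idx c0 (L + ((n + L) * (n + L) + L))) ->
  exists w, sat e (dT K cS c0 (numeral ((n + L) * (n + L) + L)) (numeral u) (numeral w)).
Proof.
  intros H. destruct (delta_ex K cS c0 n L u H) as [w Hw]. exists w. rewrite sat_dT. apply Hw; reflexivity.
Qed.

Lemma delta0_dT N u w : delta0 (dT K cS c0 (numeral N) (numeral u) (numeral w)).
Proof.
  rewrite dT_chain. repeat (apply delta0_subst; [apply closed_numeral|]). apply isd0_ok. vm_compute. reflexivity.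
Qed.

Lemma delta0_dT2 N : delta0 (dT K cS c0 (numeral N) (tvar 95) (tvar 96)).
Proof.
  rewrite dT_chain2. repeat (apply delta0_subst; [apply closed_numeral|]). apply isd0_ok. vm_compute. reflexivity.
Qed.

Lemma sentence_dT N u w : sentence (dT K cS c0 (numeral N) (numeral u) (numeral w)).
Proof.
  intros v. destruct (free_in v _) eqn:E; auto.
  apply dT_free in E; try apply avoid_num. rewrite !closed_numeral in E. intuition discriminate.
Qed.

Lemma delta0_CL N m w : delta0 (CL K cS c0 (numeral N) (numeral m) (numeral w)).
Proof.
  unfold CL. apply D0ball; [apply closed_numeral|]. apply D0ball; [reflexivity|].
  constructor; [apply delta0_dT2| constructor].
Qed.

Lemma sentence_CL N m w : sentence (CL K cS c0 (numeral N) (numeral m) (numeral w)).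
Proof.
  intros v. destruct (free_in v _) eqn:E; auto.
  apply CL_free in E; try apply avoid_num. rewrite !closed_numeral in E. intuition discriminate.
Qed.

End Sem.

End MP11.
Import MP11.

Module MP12.

Ltac eqb_simpl :=
  repeat match goal with
  | |- context [Nat.eqb ?a ?a] => rewrite (Nat.eqb_refl a)
  | |- context [Nat.eqb ?a ?b] => rewrite (proj2 (Nat.eqb_neq a b)) by lia
  end.
Ltac numclosed :=
  repeat match goal with
  | |- context [subst_term ?v ?r (numeral ?n)] => rewrite (subst_term_notocc v r (numeral n)) by apply closed_numeral
  end.

Section Repr.
Variable T : formula -> Prop.
Hypothesis HB : forall f, IDelta0_axiom f -> provable T f.
Variables K cS c0 n0 L0 m : nat.
Let N := (n0 + L0) * (n0 + L0) + L0.
Hypothesis Hm : m + fibZ (idx K L0) = n0 + Sfun cS L0 N + fibZ (idx c0 (L0 + N)).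

Lemma uniq u : (exists n L, N = (n + L) * (n + L) + L /\
    u + fibZ (idx K L) = n + Sfun cS L N + fibZ (idx c0 (L + N))) -> u = m.
Proof.
  intros [n [L [H1 H2]]]. unfold N in H1. apply pair_inj in H1. destruct H1; subst. fold N in H2. lia.
Qed.

Lemma wstar : exists w, m <= w /\ provable T (dT K cS c0 (numeral N) (numeral m) (numeral w)) /\
   provable T (CL K cS c0 (numeral N) (numeral m) (numeral w)).
Proof.
  destruct (dT_ex K cS c0 e0 n0 L0 m Hm) as [w Hw]. fold N in Hw.
  exists w. split; [apply (dT_fun K cS c0 e0 N m w Hw)|]. split.
  - apply d0_complete; auto. apply delta0_dT. apply sentence_dT.
  - apply d0_complete; auto. apply delta0_CL. apply sentence_CL.
    unfold CL. cbn [sat]. intros V HV U HU Hd.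
    rewrite eval_numeral. cbn [eval]. rewrite update_eq.
    apply dT2_fun in Hd. apply uniq in Hd. rewrite update_eq in Hd. exact Hd.
Qed.


Lemma subst_fand x t a b : subst x t (fand a b) = fand (subst x t a) (subst x t b).
Proof. reflexivity. Qed.

Lemma bvs_dT v a b c : In v (bvs (dT K cS c0 a b c)) -> 20 <= v <= 35.
Proof.
  unfold dT, deltaT, DELTAT. cbn [toF bvs bex ball fand Beta PAIR flt app]. intros H.
  simpl in H. intuition lia.
Qed.

Lemma dT_le a b c : provable T (fimp (dT K cS c0 a b c) (fle b c)).
Proof. unfold dT, deltaT, DELTAT. cbn [toF]. taut. Qed.

Lemma L_CL96 a b c t : closed_t t -> occurs_term 96 a = false -> occurs_term 96 b = false -> occurs_term 96 c = false ->
  provable T (fimp (CL K cS c0 a b c) (fimp (fle t c) (fall 95 (fimp (fle (tvar 95) t)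
     (fimp (dT K cS c0 a (tvar 95) t) (feq (tvar 95) b)))))).
Proof.
  intros Ht Ha Hb Hc. unfold CL.
  match goal with |- provable _ (fimp (fall 96 ?X) _) =>
    assert (H := PAx T _ (LA4 96 t X (free_for_closed _ _ _ Ht))) end.
  revert H. cbn [subst subst_term Nat.eqb]. rewrite dT_subst by lia. cbn [subst_term Nat.eqb].
  rewrite !subst_term_notocc by auto. auto.
Qed.

Lemma L_CL96v a b c : occurs_term 96 a = false -> occurs_term 96 b = false -> occurs_term 96 c = false ->
  provable T (fimp (CL K cS c0 a b c) (fimp (fle (tvar 97) c) (fall 95 (fimp (fle (tvar 95) (tvar 97))
     (fimp (dT K cS c0 a (tvar 95) (tvar 97)) (feq (tvar 95) b)))))).
Proof.
  intros Ha Hb Hc. unfold CL.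
  match goal with |- provable _ (fimp (fall 96 ?X) _) =>
    assert (Hf : free_for (tvar 97) 96 X = true);
    [apply free_for_var_notbound; intros Hin; simpl in Hin; intuition lia|];
    assert (H := PAx T _ (LA4 96 (tvar 97) X Hf)) end.
  revert H. cbn [subst subst_term Nat.eqb]. rewrite dT_subst by lia. cbn [subst_term Nat.eqb].
  rewrite !subst_term_notocc by auto. auto.
Qed.

Lemma L_95 a b t s : occurs_term 95 a = false -> occurs_term 95 b = false -> occurs_term 95 t = false ->
  (closed_t s \/ exists y, s = tvar y /\ 36 <= y) ->
  provable T (fimp (fall 95 (fimp (fle (tvar 95) t) (fimp (dT K cS c0 a (tvar 95) t) (feq (tvar 95) b))))
                   (fimp (fle s t) (fimp (dT K cS c0 a s t) (feq s b)))).
Proof.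
  intros Ha Hb Ht Hs.
  match goal with |- provable _ (fimp (fall 95 ?X) _) =>
    assert (Hf : free_for s 95 X = true) end.
  { destruct Hs as [Hs|[y [Hy1 Hy2]]]; [apply free_for_closed; auto|]. subst s.
    apply free_for_var_notbound. intros Hin. simpl in Hin. intuition lia. }
  assert (H := PAx T _ (LA4 95 s _ Hf)).
  revert H. cbn [subst subst_term Nat.eqb]. rewrite dT_subst by lia. cbn [subst_term Nat.eqb].
  rewrite !subst_term_notocc by auto. auto.
Qed.

Lemma R1 y : 100 <= y -> provable T (fimp (Dform K cS c0 (numeral N) (tvar y)) (feq (tvar y) (numeral m))).
Proof.
  intros Hy. destruct wstar as [w [Hmw [F1 F2]]].
  unfold Dform. apply ex_elim.
  { cbn [free_in occurs_term]. rewrite closed_numeral. eqb_simpl. reflexivity. }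
  assert (Q := q2_var T HB 97 w).
  assert (A1 := L_CL96 (numeral N) (tvar y) (tvar 97) (numeral w) (closed_numeral w)
                 (closed_numeral _ _) ltac:(simpl; eqb_simpl; auto) eq_refl).
  assert (A2 := L_95 (numeral N) (tvar y) (numeral w) (numeral m) (closed_numeral _ _)
                 ltac:(simpl; eqb_simpl; auto) (closed_numeral _ _) (or_introl (closed_numeral m))).
  assert (A3 := le_num T HB m w Hmw).
  assert (A4 := E_sym T (numeral m) (tvar y)).
  assert (B1 := L_CL96v (numeral N) (numeral m) (numeral w) (closed_numeral _ _) (closed_numeral _ _) (closed_numeral _ _)).
  assert (B1' := mp1 _ _ _ F2 B1).
  assert (H36 : 36 <= y) by lia.
  assert (B2 := L_95 (numeral N) (numeral m) (tvar 97) (tvar y) (closed_numeral _ _) (closed_numeral _ _) eq_refl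
                 (or_intror (ex_intro (fun y0 => tvar y = tvar y0 /\ 36 <= y0) y (conj eq_refl H36)))).
  assert (B3 := dT_le (numeral N) (tvar y) (tvar 97)).
  eapply mp4; [exact Q|exact A1|exact A2|exact A3|]. eapply mp4; [exact F1|exact A4|exact B1'|exact B2|].
  tk1 B3.
Qed.

Lemma R2 y : 100 <= y -> provable T (fimp (feq (tvar y) (numeral m)) (Dform K cS c0 (numeral N) (tvar y))).
Proof.
  intros Hy. destruct wstar as [w [Hmw [F1 F2]]].
  assert (H1 := ex_intro_t T 97 (numeral w) (fand (dT K cS c0 (numeral N) (numeral m) (tvar 97))
                                                   (CL K cS c0 (numeral N) (numeral m) (tvar 97)))
                 (free_for_closed _ _ _ (closed_numeral w))).
  revert H1. rewrite subst_fand. rewrite dT_subst, CL_subst by lia. cbn [subst_term Nat.eqb].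
  numclosed. intros H1.
  assert (H2 := leibniz T y (numeral m) (Dform K cS c0 (numeral N) (tvar y)) (closed_numeral m)).
  rewrite Dform_subst in H2 by lia. cbn [subst_term] in H2. rewrite Nat.eqb_refl in H2.
  rewrite (subst_term_notocc y _ (numeral N)) in H2 by apply closed_numeral.
  eapply mp4; [exact F1|exact F2|exact H1|exact H2|]. unfold Dform. taut.
Qed.

End Repr.


End MP12.
Import MP12.

Module MP13.

Ltac eqb_simpl :=
  repeat match goal with
  | |- context [Nat.eqb ?a ?a] => rewrite (Nat.eqb_refl a)
  | |- context [Nat.eqb ?a ?b] => rewrite (proj2 (Nat.eqb_neq a b)) by lia
  end.

Lemma seqZ_from_app i l1 l2 : seqZ_from i (l1 ++ l2) = seqZ_from i l1 + seqZ_from (i + length l1) l2.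
Proof.
  revert i; induction l1; intros i; simpl. rewrite Nat.add_0_r; auto.
  rewrite IHl1. replace (S i + length l1) with (i + S (length l1)) by lia. lia.
Qed.

Lemma Sfun_shift cS : forall N p, Sfun cS p (S N) = fibZ (idx cS p) + Sfun cS (S p) N.
Proof.
  induction N; intros p.
  - cbn [Sfun]. rewrite Nat.add_0_r. lia.
  - change (Sfun cS p (S (S N))) with (Sfun cS p (S N) + fibZ (idx cS (p + S N))).
    change (Sfun cS (S p) (S N)) with (Sfun cS (S p) N + fibZ (idx cS (S p + N))).
    rewrite IHN. replace (p + S N) with (S p + N) by lia. lia.
Qed.

Lemma term_syms_numeral N : term_syms (numeral N) = repeat SSucc N ++ [SZero].
Proof. induction N; simpl; auto. rewrite IHN; auto. Qed.

Lemma seqZ_numeral (c : symbol -> nat) N : forall p,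
  seqZ_from p (map c (term_syms (numeral N))) = Sfun (c SSucc) p N + fibZ (idx (c SZero) (p + N)).
Proof.
  induction N; intros p.
  - cbn [numeral term_syms map seqZ_from Sfun]. unfold idx.
    replace (2 * cantor (c SZero) p + 1) with (S (cantor (c SZero) (p+0) + cantor (c SZero) (p+0))) by (rewrite Nat.add_0_r; lia). lia.
  - cbn [numeral term_syms map seqZ_from]. rewrite IHN. rewrite Sfun_shift.
    replace (S p + N) with (p + S N) by lia. unfold idx.
    replace (2 * cantor (c SSucc) p + 1) with (S (cantor (c SSucc) p + cantor (c SSucc) p)) by lia. lia.
Qed.

Section Main.
Variable T : formula -> Prop.
Hypothesis HB : forall f, IDelta0_axiom f -> provable T f.

Lemma P2 K cS c0 N y z : 100 <= y -> 100 <= z -> y <> z ->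
  provable T (fiff (fall z (fimp (fneg (Dform K cS c0 (tvar z) (tvar y))) (fneg (feq (tvar z) (numeral N)))))
                   (Dform K cS c0 (numeral N) (tvar y))).
Proof.
  intros Hy Hz Hyz.
  assert (H1 := PAx T _ (LA4 z (numeral N) (fimp (fneg (Dform K cS c0 (tvar z) (tvar y))) (fneg (feq (tvar z) (numeral N))))
                 (free_for_closed _ _ _ (closed_numeral N)))).
  revert H1. cbn [subst]. rewrite Dform_subst by lia. cbn [subst_term]. eqb_simpl.
  rewrite (subst_term_notocc z _ (numeral N)) by apply closed_numeral. intros H1.
  assert (H2 := E_refl T (numeral N)).
  assert (H3 := leibniz T z (numeral N) (Dform K cS c0 (tvar z) (tvar y)) (closed_numeral N)).
  rewrite Dform_subst in H3 by lia. cbn [subst_term] in H3. rewrite Nat.eqb_refl in H3.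
  rewrite (proj2 (Nat.eqb_neq y z) Hyz) in H3.
  assert (H4 : provable T (fimp (Dform K cS c0 (numeral N) (tvar y))
        (fall z (fimp (fneg (Dform K cS c0 (tvar z) (tvar y))) (fneg (feq (tvar z) (numeral N))))))).
  { apply all_intro.
    - destruct (free_in z (Dform K cS c0 (numeral N) (tvar y))) eqn:E; auto.
      apply Dform_free in E; try apply avoid_num; [|apply avoid_var; lia].
      rewrite closed_numeral in E. destruct E as [E|E]; [discriminate|].
      cbn [occurs_term] in E. apply Nat.eqb_eq in E; lia.
    - tk1 H3. }
  tk3 H1 H2 H4.
Qed.


Lemma P3l R x y m : y <> x ->
  provable T (fiff R (feq (tvar y) (numeral m))) ->
  provable T (fiff (fall y (fimp (feq (tvar y) (tvar x)) R)) (feq (tvar x) (numeral m))).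
Proof.
  intros Hxy HR.
  assert (H1 : provable T (fimp (fimp (feq (tvar y) (tvar x)) R) (fimp (feq (tvar y) (tvar x)) (feq (tvar y) (numeral m))))) by tk1 HR.
  apply (all_mono T y) in H1.
  assert (H2 := PAx T _ (LA4 y (tvar x) (fimp (feq (tvar y) (tvar x)) (feq (tvar y) (numeral m))) eq_refl)).
  revert H2. cbn [subst subst_term]. rewrite Nat.eqb_refl, (proj2 (Nat.eqb_neq x y)) by auto.
  rewrite (subst_term_notocc y _ (numeral m)) by apply closed_numeral. intros H2.
  assert (H3 := E_refl T (tvar x)).
  assert (H4 : provable T (fimp (feq (tvar x) (numeral m)) (fall y (fimp (feq (tvar y) (tvar x)) R)))).
  { apply all_intro.
    - cbn [free_in occurs_term]. rewrite closed_numeral, (proj2 (Nat.eqb_neq x y)) by auto. reflexivity.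
    - assert (H5 := E_trans T (tvar y) (tvar x) (numeral m)). tk2 H5 HR. }
  tk4 H1 H2 H3 H4.
Qed.

Lemma P5l phi x m : provable T (fiff (fex x (fand phi (feq (tvar x) (numeral m)))) (subst x (numeral m) phi)).
Proof.
  assert (H1 := leibniz T x (numeral m) phi (closed_numeral m)).
  assert (H2 : provable T (fimp (fex x (fand phi (feq (tvar x) (numeral m)))) (subst x (numeral m) phi))).
  { apply ex_elim.
    - destruct (free_in x (subst x (numeral m) phi)) eqn:E; auto.
      destruct (free_in_subst _ _ _ _ E) as [[_ H]|H]; [congruence|]. rewrite closed_numeral in H; discriminate.
    - tk1 H1. }
  assert (H3 := ex_intro_t T x (numeral m) (fand phi (feq (tvar x) (numeral m))) (free_for_closed _ _ _ (closed_numeral m))).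
  rewrite subst_fand in H3. cbn [subst subst_term] in H3. rewrite Nat.eqb_refl in H3.
  rewrite (subst_term_notocc x _ (numeral m)) in H3 by apply closed_numeral.
  assert (H4 := E_refl T (numeral m)).
  tk3 H2 H3 H4.
Qed.

End Main.

Definition build (phi : formula) (x : nat) (K cS c0 : nat) (h : formula) : formula :=
  fex x (fand phi (fall (100 + x) (fimp (feq (tvar (100 + x)) (tvar x))
    (fall (101 + x) (fimp (fneg (Dform K cS c0 (tvar (101 + x)) (tvar (100 + x)))) (fneg h)))))).

Definition Pre' phi x K cS c0 : list symbol :=
  [SNeg; SAll; SVar x; SNeg; SNeg; SImp] ++ formula_syms phi ++
  [SNeg; SAll; SVar (100 + x); SImp; SEq; SVar (100 + x); SVar x; SAll; SVar (101 + x); SImp; SNeg] ++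
  formula_syms (Dform K cS c0 (tvar (101 + x)) (tvar (100 + x))) ++ [SNeg].

Opaque Dform.
Lemma syms_build phi x K cS c0 h : formula_syms (build phi x K cS c0 h) = Pre' phi x K cS c0 ++ formula_syms h.
Proof.
  unfold build, Pre', fex, fand. cbn [formula_syms term_syms]. rewrite <- !app_assoc. cbn [app].
  reflexivity.
Qed.

End MP13.
Import MP13.


Opaque Dform.

Theorem lemma6p1 (c : symbol -> nat) (Hc : admissible_code c)
  (T : formula -> Prop) (HTsent : forall f, T f -> sentence f)
  (HText : extends_IDelta0_Omega1 T) (Hcons : consistent T)
  (phi : formula) (x : nat)
  (Hphi : forall y, free_in y phi = true -> y = x) :
  exists psi : formula, sentence psi /\
    provable T (fiff psi (subst x (numeral (code c psi)) phi)).
Proof.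
  destruct HText as [HB _].
  set (K := c (SVar 0)). set (cS := c SSucc). set (c0 := c SZero).
  set (y := 100 + x). set (z := 101 + x).
  set (theta := build phi x K cS c0 (feq (tvar z) (tvar 0))).
  set (n0 := code c theta).
  remember (Pre' phi x K cS c0 ++ [SEq; SVar z]) as Pre eqn:HPre.
  set (L0 := length Pre + 1).
  set (N := (n0 + L0) * (n0 + L0) + L0).
  set (psi := build phi x K cS c0 (feq (tvar z) (numeral N))).
  set (m := code c psi).
  assert (Hth : n0 = seqZ_from 1 (map c Pre) + fibZ (idx K L0)).
  { unfold n0, code, seqZ, theta. rewrite syms_build. cbn [formula_syms term_syms app].
    replace (Pre' phi x K cS c0 ++ [SEq; SVar z; SVar 0]) with (Pre ++ [SVar 0])
      by (rewrite HPre, <- app_assoc; reflexivity).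
    rewrite map_app, seqZ_from_app, length_map. cbn [map seqZ_from].
    unfold idx, L0. replace (1 + length Pre) with (length Pre + 1) by lia.
    fold K. replace (2 * cantor K (length Pre + 1) + 1) with (S (cantor K (length Pre + 1) + cantor K (length Pre + 1))) by lia.
    lia. }
  assert (Hps : m = seqZ_from 1 (map c Pre) + Sfun cS L0 N + fibZ (idx c0 (L0 + N))).
  { unfold m, code, seqZ, psi. rewrite syms_build. cbn [formula_syms term_syms app].
    replace (Pre' phi x K cS c0 ++ SEq :: SVar z :: term_syms (numeral N)) with (Pre ++ term_syms (numeral N))
      by (rewrite HPre, <- app_assoc; reflexivity).
    rewrite map_app, seqZ_from_app, length_map. rewrite seqZ_numeral.
    unfold L0. replace (1 + length Pre) with (length Pre + 1) by lia. fold cS c0. lia. }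
  assert (Hm : m + fibZ (idx K L0) = n0 + Sfun cS L0 ((n0 + L0) * (n0 + L0) + L0) + fibZ (idx c0 (L0 + ((n0 + L0) * (n0 + L0) + L0)))).
  { fold N. lia. }
  exists psi. split.
  - intros v. unfold psi, build, fex, fand. cbn [free_in occurs_term]. rewrite closed_numeral.
    assert (HD : free_in v (Dform K cS c0 (tvar (101 + x)) (tvar (100 + x))) = true -> v = 101 + x \/ v = 100 + x).
    { intro E. apply Dform_free in E; [|apply avoid_var; lia|apply avoid_var; lia].
      cbn [occurs_term] in E. destruct E as [E|E]; apply Nat.eqb_eq in E; auto. }
    destruct (Nat.eqb_spec x v); [reflexivity|].
    destruct (free_in v phi) eqn:Ef; [apply Hphi in Ef; congruence|].
    destruct (Nat.eqb_spec (100 + x) v); [reflexivity|].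
    destruct (Nat.eqb_spec (101 + x) v); [simpl; reflexivity|].
    destruct (free_in v (Dform K cS c0 (tvar (101 + x)) (tvar (100 + x)))) eqn:ED;
      [destruct (HD eq_refl); lia|]. destruct (Nat.eqb_spec z v); [unfold z in *; lia|]. reflexivity.
  - set (R := fall z (fimp (fneg (Dform K cS c0 (tvar z) (tvar y))) (fneg (feq (tvar z) (numeral N))))).
    assert (HR : provable T (fiff R (feq (tvar y) (numeral m)))).
    { assert (H1 := P2 T K cS c0 N y z ltac:(unfold y; lia) ltac:(unfold z; lia) ltac:(unfold y, z; lia)).
      assert (H2 := R1 T HB K cS c0 n0 L0 m Hm y ltac:(unfold y; lia)).
      assert (H3 := R2 T HB K cS c0 n0 L0 m Hm y ltac:(unfold y; lia)).
      fold N in H2, H3. fold R in H1. tk3 H1 H2 H3. }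
    assert (H3 := P3l T R x y m ltac:(unfold y; lia) HR).
    assert (H4 : provable T (fiff (fand phi (fall y (fimp (feq (tvar y) (tvar x)) R))) (fand phi (feq (tvar x) (numeral m))))) by tk1 H3.
    apply (ex_iff T x) in H4.
    assert (H5 := P5l T phi x m).
    fold m. unfold psi, build. fold y z. fold R. tk2 H4 H5.
Qed.
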